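(* Let $(u,m)$ be a pair of smooth (classical) solutions to the system \[ \begin{cases} u_t + \frac{\sigma^2}{2} u_{xx} - ru + G(u_x,m)^2 = 0, & 0<t<T,\ 0<x<L,\\ m_t - \frac{\sigma^2}{2} m_{xx} - \{G(u_x,m)m\}_x = 0, & 0<t<T,\ 0<x<L,\\ m(0,x)=m_0(x),\quad u(T,x)=u_T(x), & 0\le x\le L,\\ u_x(t,0)=u_x(t,L)=0, & 0\le t\le T,\\ \frac{\sigma^2}{2} m_x(t,x) + G(u_x,m)m(t,x) = 0, & 0\le t\le T,\ x\in\{0,L\}, \end{cases} \] where $G(u_x,m)(t,x) := \frac12\left(b + c\int_0^L u_x(t,y)m(t,y)\,dy - u_x(t,x)\right)$. Then \[ \|u\|_\infty + \|u_x\|_\infty \le C, \] where the constant $C>0$ does not depend on $\sigma$. In particular, for all $t\in[0,T]$, \[ \left|\int_0^L u_x(t,x)m(t,x)\,dx\right| \le C, \] with $C>0$ independent of $\sigma$.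
   Context: Standing setting: $L,T,\sigma,r>0$ are constants, $\epsilon>0$, and $b=\frac{2}{2+\epsilon}$, $c=\frac{\epsilon}{2+\epsilon}$. The data satisfy: $u_T,m_0\in C^{2+\gamma}([0,L])$ for some $\gamma>0$; $u_T'(0)=u_T'(L)=0$ and $m_0(0)=m_0'(0)=m_0(L)=m_0'(L)=0$; $m_0$ is a probability density on $[0,L]$; $u_T\ge 0$. Constants may depend on $u_T,m_0,L,T,r,\epsilon$ but (as stated) not on $\sigma$. $\|\cdot\|_\infty$ is the sup norm on $[0,T]\times[0,L]$. *)

(* Defs.v *)
From Stdlib Require Import Reals Lra.
From Coquelicot Require Import Coquelicot.
Open Scope R_scope.

Definition bcoef (eps : R) : R := 2 / (2 + eps).
Definition ccoef (eps : R) : R := eps / (2 + eps).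

Definition cont_on_seg (L : R) (f : R -> R) : Prop :=
  forall x, 0 <= x <= L -> forall e, 0 < e -> exists d, 0 < d /\
    forall y, 0 <= y <= L -> Rabs (y - x) < d -> Rabs (f y - f x) < e.

(* f is in C^{2+gamma}([0,L]), with f1 = f' and f2 = f'' (derivatives taken in
   the interior, extended continuously to the closed interval), f2 gamma-Hölder. *)
Definition C2gamma (L gamma : R) (f f1 f2 : R -> R) : Prop :=
  (forall x, 0 < x < L -> is_derive f x (f1 x)) /\
  (forall x, 0 < x < L -> is_derive f1 x (f2 x)) /\
  cont_on_seg L f /\ cont_on_seg L f1 /\ cont_on_seg L f2 /\
  exists K, forall x y, 0 <= x <= L -> 0 <= y <= L -> x < y ->
    Rabs (f2 y - f2 x) <= K * Rpower (y - x) gamma.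

Definition cont_on_rect (T L : R) (f : R -> R -> R) : Prop :=
  forall t x, 0 <= t <= T -> 0 <= x <= L -> forall e, 0 < e -> exists d, 0 < d /\
    forall s y, 0 <= s <= T -> 0 <= y <= L -> Rabs (s - t) < d -> Rabs (y - x) < d ->
      Rabs (f s y - f t x) < e.

(* Classical C^{1,2} regularity on [0,T]x[0,L]: w has partial derivatives
   w_t = wt, w_x = wx, w_xx = wxx in the open rectangle, and w, wt, wx, wxx
   are continuous up to the boundary (so wt, wx, wxx are the continuous
   extensions of the derivatives to the closed rectangle). *)
Definition C12 (T L : R) (w wt wx wxx : R -> R -> R) : Prop :=
  (forall t x, 0 < t < T -> 0 < x < L ->
     is_derive (fun s => w s x) t (wt t x) /\
     is_derive (fun y => w t y) x (wx t x) /\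
     is_derive (fun y => wx t y) x (wxx t x)) /\
  cont_on_rect T L w /\ cont_on_rect T L wt /\
  cont_on_rect T L wx /\ cont_on_rect T L wxx.

Definition Gfun (eps L : R) (ux m : R -> R -> R) (t x : R) : R :=
  / 2 * (bcoef eps + ccoef eps * RInt (fun y => ux t y * m t y) 0 L - ux t x).

(* Main.v *)
Require Import Defs.
From Stdlib Require Import Reals Lra Classical ClassicalEpsilon.
From Coquelicot Require Import Coquelicot.
Open Scope R_scope.
Ltac req := match goal with |- @eq _ ?a ?b => change (@eq R a b) end.

Definition scont (a b : R) (f : R -> R) : Prop :=
  forall x, a <= x <= b -> forall e, 0 < e -> exists d, 0 < d /\
    forall y, a <= y <= b -> Rabs (y - x) < d -> Rabs (f y - f x) < e.

Definition clamp (a b x : R) : R := Rmax a (Rmin b x).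

Lemma clamp_in a b x : a <= b -> a <= clamp a b x <= b.
Proof. intros; unfold clamp, Rmax, Rmin; repeat destruct Rle_dec; lra. Qed.
Lemma clamp_id a b x : a <= x <= b -> clamp a b x = x.
Proof. intros; unfold clamp, Rmax, Rmin; repeat destruct Rle_dec; lra. Qed.
Lemma clamp_lip a b x y : a <= b -> Rabs (clamp a b y - clamp a b x) <= Rabs (y - x).
Proof. intros; unfold clamp, Rmax, Rmin; repeat destruct Rle_dec;
  unfold Rabs; repeat destruct Rcase_abs; lra. Qed.

Lemma locally_R (x : R) (P : R -> Prop) :
  (exists d, 0 < d /\ forall y, Rabs (y - x) < d -> P y) -> locally x P.
Proof. intros [d [Hd H]]. exists (mkposreal d Hd). intros y Hy. apply H. exact Hy. Qed.

Lemma scont_clamp_pt a b f : a <= b -> scont a b f -> forall z, continuity_pt (fun x => f (clamp a b x)) z.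
Proof.
  intros Hab Hf z e He.
  destruct (Hf (clamp a b z) (clamp_in a b z Hab) e He) as [d [Hd H]].
  exists d; split; [lra|]. intros y [_ Hy]. simpl in *. unfold R_dist in *.
  apply H. apply clamp_in; auto. eapply Rle_lt_trans. apply clamp_lip; auto. auto.
Qed.

Lemma scont_clamp_c a b f : a <= b -> scont a b f -> forall z, continuous (fun x => f (clamp a b x)) z.
Proof. intros. apply continuity_pt_filterlim. apply scont_clamp_pt; auto. Qed.

Lemma scont_exRInt a b f : a <= b -> scont a b f -> ex_RInt f a b.
Proof.
  intros Hab Hf. apply ex_RInt_ext with (fun x => f (clamp a b x)).
  { intros x Hx. rewrite Rmin_left in Hx by lra. rewrite Rmax_right in Hx by lra. rewrite clamp_id; lra. }
  apply (ex_RInt_continuous (V:=R_CompleteNormedModule)). intros; apply scont_clamp_c; auto.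
Qed.

Lemma evt1 a b f : a <= b -> scont a b f -> exists x0, a <= x0 <= b /\ forall x, a <= x <= b -> f x <= f x0.
Proof.
  intros Hab Hf. destruct (continuity_ab_maj (fun x => f (clamp a b x)) a b Hab) as [x0 [H1 H2]].
  { intros; apply scont_clamp_pt; auto. }
  exists x0; split; auto. intros x Hx. specialize (H1 x Hx). rewrite !clamp_id in H1; auto.
Qed.

Lemma scont_opp a b f : scont a b f -> scont a b (fun x => - f x).
Proof. intros Hf x Hx e He. destruct (Hf x Hx e He) as [d [Hd H]]. exists d; split; auto.
  intros y Hy Hyx. replace (- f y - - f x) with (-(f y - f x)) by ring. rewrite Rabs_Ropp. auto. Qed.

Lemma evt1_min a b f : a <= b -> scont a b f -> exists x0, a <= x0 <= b /\ forall x, a <= x <= b -> f x0 <= f x.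
Proof. intros Hab Hf. destruct (evt1 a b _ Hab (scont_opp a b f Hf)) as [x0 [H1 H2]].
  exists x0; split; auto. intros x Hx; specialize (H2 x Hx); lra. Qed.

Lemma derive_cont f x l : is_derive f x l -> continuity_pt f x.
Proof. intros H. apply continuity_pt_filterlim. apply (ex_derive_continuous (V:=R_NormedModule)). exists l; auto. Qed.

Lemma mvt_open f df a b : a < b ->
  (forall x, a <= x <= b -> continuity_pt f x) ->
  (forall x, a < x < b -> is_derive f x (df x)) ->
  exists c, a < c < b /\ f b - f a = df c * (b - a).
Proof.
  intros Hab Hc Hd.
  assert (pr1 : forall c, a < c < b -> derivable_pt f c).
  { intros c Hc'. exists (df c). apply is_derive_Reals. auto. }
  assert (pr2 : forall c, a < c < b -> derivable_pt id c).
  { intros c _. apply derivable_pt_id. }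
  destruct (MVT f id a b pr1 pr2 Hab Hc) as [c [P HP]].
  { intros; apply derivable_continuous_pt. apply derivable_pt_id. }
  exists c; split; auto.
  rewrite (derive_pt_eq_0 f c (df c) (pr1 c P)) in HP by (apply is_derive_Reals; auto).
  rewrite (derive_pt_eq_0 id c 1 (pr2 c P)) in HP by apply derivable_pt_lim_id.
  unfold id in HP. lra.
Qed.

Lemma mvt_s f df a b : a < b -> scont a b f ->
  (forall x, a < x < b -> is_derive f x (df x)) ->
  exists c, a < c < b /\ f b - f a = df c * (b - a).
Proof.
  intros Hab Hf Hd.
  destruct (mvt_open (fun x => f (clamp a b x)) df a b Hab) as [c [Hc H]].
  { intros; apply scont_clamp_pt; auto; lra. }
  { intros x Hx. apply is_derive_ext_loc with f; auto.
    apply locally_R. exists (Rmin (x - a) (b - x)). split.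
    { apply Rmin_case; lra. }
    intros y Hy. rewrite clamp_id; auto. revert Hy. unfold Rmin; destruct Rle_dec; unfold Rabs; destruct Rcase_abs; intros; lra. }
  exists c; split; auto. rewrite !clamp_id in H; lra.
Qed.

Lemma deriv_rmax f x l d : is_derive f x l -> 0 < d ->
  (forall h, 0 <= h < d -> f (x + h) <= f x) -> l <= 0.
Proof.
  intros Hd Hd0 H. apply is_derive_Reals in Hd.
  destruct (Rle_or_lt l 0) as [|Hl]; auto. exfalso.
  destruct (Hd l Hl) as [del Hdel].
  set (h := Rmin del d / 2).
  assert (Hh : 0 < h) by (unfold h; apply Rmin_case; destruct del; simpl; lra).
  assert (Hh2 : h < del) by (unfold h; generalize (Rmin_l del d); destruct del; simpl in *; lra).
  assert (Hh3 : h < d) by (unfold h; generalize (Rmin_r del d); lra).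
  specialize (Hdel h ltac:(lra) ltac:(rewrite Rabs_right; lra)).
  specialize (H h ltac:(lra)).
  assert ((f (x + h) - f x) / h <= 0).
  { unfold Rdiv. apply Rmult_le_0_r; [lra|]. left; apply Rinv_0_lt_compat; lra. }
  revert Hdel. unfold Rabs; destruct Rcase_abs; lra.
Qed.

Lemma deriv_lmax f x l d : is_derive f x l -> 0 < d ->
  (forall h, 0 <= h < d -> f (x - h) <= f x) -> 0 <= l.
Proof.
  intros Hd Hd0 H.
  assert (Hd' : is_derive (fun y => f (- y)) (- x) (- l)).
  { replace (- l) with (scal (-1) l) by (unfold scal; simpl; unfold mult; simpl; ring).
    apply (is_derive_comp f (fun y => - y) (-x) l (-1)).
    - rewrite Ropp_involutive; auto.
    - auto_derive; auto; ring. }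
  assert (- l <= 0).
  { apply (deriv_rmax _ _ _ d Hd' Hd0). intros h Hh. rewrite Ropp_involutive.
    replace (- (- x + h)) with (x - h) by ring. auto. }
  lra.
Qed.

Lemma deriv_max0 f x l d : is_derive f x l -> 0 < d ->
  (forall y, Rabs (y - x) < d -> f y <= f x) -> l = 0.
Proof.
  intros Hd Hd0 H.
  assert (l <= 0). { apply (deriv_rmax f x l d Hd Hd0). intros h Hh. apply H.
    replace (x + h - x) with h by ring. rewrite Rabs_right; lra. }
  assert (0 <= l). { apply (deriv_lmax f x l d Hd Hd0). intros h Hh. apply H.
    replace (x - h - x) with (- h) by ring. rewrite Rabs_Ropp, Rabs_right; lra. }
  lra.
Qed.

Lemma deriv2_max g g' x d l2 : 0 < d ->
  (forall y, Rabs (y - x) < d -> is_derive g y (g' y)) ->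
  is_derive g' x l2 ->
  (forall y, Rabs (y - x) < d -> g y <= g x) -> l2 <= 0.
Proof.
  intros Hd0 Hg Hg' Hmax.
  assert (H0 : g' x = 0).
  { apply (deriv_max0 g x (g' x) d); auto. apply Hg. rewrite Rminus_diag, Rabs_R0; auto. }
  destruct (Rle_or_lt l2 0) as [|Hl]; auto. exfalso.
  apply is_derive_Reals in Hg'. destruct (Hg' l2 Hl) as [del Hdel].
  set (s := Rmin del d / 2).
  assert (Hs : 0 < s) by (unfold s; apply Rmin_case; destruct del; simpl; lra).
  assert (Hs2 : s < del) by (unfold s; generalize (Rmin_l del d); destruct del; simpl in *; lra).
  assert (Hs3 : s < d) by (unfold s; generalize (Rmin_r del d); lra).
  destruct (mvt_open g g' x (x + s)) as [c [Hc Heq]]; [lra| | |].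
  { intros y Hy. apply derive_cont with (g' y). apply Hg. unfold Rabs; destruct Rcase_abs; lra. }
  { intros y Hy. apply Hg. unfold Rabs; destruct Rcase_abs; lra. }
  specialize (Hdel (c - x) ltac:(lra) ltac:(rewrite Rabs_right; lra)).
  replace (x + (c - x)) with c in Hdel by ring. rewrite H0, Rminus_0_r in Hdel.
  assert (Hpos : 0 < g' c / (c - x)) by (revert Hdel; unfold Rabs; destruct Rcase_abs; lra).
  assert (0 < g' c).
  { replace (g' c) with (g' c / (c - x) * (c - x)) by (field; lra). apply Rmult_lt_0_compat; lra. }
  specialize (Hmax (x + s) ltac:(replace (x + s - x) with s by ring; rewrite Rabs_right; lra)).
  assert (0 < g' c * (x + s - x)) by (apply Rmult_lt_0_compat; lra).
  lra.
Qed.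

Lemma scont_of_pt a b f F : (forall x, a <= x <= b -> f x = F x) ->
  (forall x, a <= x <= b -> continuity_pt F x) -> scont a b f.
Proof.
  intros Heq Hc x Hx e He. destruct (Hc x Hx e He) as [d [Hd H]].
  exists d; split; [lra|]. intros y Hy Hyx. rewrite !Heq by auto.
  destruct (Req_dec y x) as [->|Hne]. { rewrite Rminus_diag, Rabs_R0; auto. }
  apply (H y); repeat split; try exact I; auto.
Qed.

Lemma scont_pt a b f : a <= b -> scont a b f -> forall x, a <= x <= b ->
  continuity_pt (fun y => f (clamp a b y)) x /\ f x = f (clamp a b x).
Proof. intros. split. apply scont_clamp_pt; auto. rewrite clamp_id; auto. Qed.

Ltac scont_lift Hab :=
  repeat match goal with
  | H : scont _ _ ?f |- _ => pose proof (scont_pt _ _ _ Hab H); clear H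
  end.

Lemma scont_plus a b f g : a <= b -> scont a b f -> scont a b g -> scont a b (fun x => f x + g x).
Proof. intros Hab Hf Hg. apply scont_of_pt with (fun x => f (clamp a b x) + g (clamp a b x)).
  intros; rewrite !clamp_id; auto. intros; apply continuity_pt_plus; apply scont_clamp_pt; auto. Qed.
Lemma scont_minus a b f g : a <= b -> scont a b f -> scont a b g -> scont a b (fun x => f x - g x).
Proof. intros Hab Hf Hg. apply scont_of_pt with (fun x => f (clamp a b x) - g (clamp a b x)).
  intros; rewrite !clamp_id; auto. intros; apply continuity_pt_minus; apply scont_clamp_pt; auto. Qed.
Lemma scont_mult a b f g : a <= b -> scont a b f -> scont a b g -> scont a b (fun x => f x * g x).
Proof. intros Hab Hf Hg. apply scont_of_pt with (fun x => f (clamp a b x) * g (clamp a b x)).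
  intros; rewrite !clamp_id; auto. intros; apply continuity_pt_mult; apply scont_clamp_pt; auto. Qed.
Lemma scont_const a b c : scont a b (fun _ => c).
Proof. intros x Hx e He. exists 1; split; [lra|]. intros. rewrite Rminus_diag, Rabs_R0; auto. Qed.
Lemma scont_comp a b f g : a <= b -> scont a b f -> (forall y, continuity_pt g y) -> scont a b (fun x => g (f x)).
Proof. intros Hab Hf Hg. apply scont_of_pt with (fun x => g (f (clamp a b x))).
  intros; rewrite !clamp_id; auto. intros. apply (continuity_pt_comp (fun x => f (clamp a b x)) g).
  apply scont_clamp_pt; auto. auto. Qed.
Lemma scont_ext a b f g : (forall x, a <= x <= b -> f x = g x) -> scont a b f -> scont a b g.
Proof. intros Heq Hf x Hx e He. destruct (Hf x Hx e He) as [d [Hd H]]. exists d; split; auto.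
  intros. rewrite <- !Heq; auto. Qed.

Lemma RInt_minusR f g a b : ex_RInt f a b -> ex_RInt g a b ->
  RInt (fun x => f x - g x) a b = RInt f a b - RInt g a b.
Proof. intros. exact (RInt_minus f g a b H H0). Qed.
Lemma RInt_plusR f g a b : ex_RInt f a b -> ex_RInt g a b ->
  RInt (fun x => f x + g x) a b = RInt f a b + RInt g a b.
Proof. intros. exact (RInt_plus f g a b H H0). Qed.
Lemma RInt_scalR f a b k : ex_RInt f a b -> RInt (fun x => k * f x) a b = k * RInt f a b.
Proof. intros. exact (RInt_scal f a b k H). Qed.
Lemma RInt_constR a b c : RInt (fun _ => c) a b = (b - a) * c.
Proof. rewrite RInt_const. reflexivity. Qed.
Lemma ex_RInt_minusR f g a b : ex_RInt f a b -> ex_RInt g a b -> ex_RInt (fun x => f x - g x) a b.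
Proof. intros. exact (ex_RInt_minus f g a b H H0). Qed.
Lemma ex_RInt_plusR f g a b : ex_RInt f a b -> ex_RInt g a b -> ex_RInt (fun x => f x + g x) a b.
Proof. intros. exact (ex_RInt_plus f g a b H H0). Qed.
Lemma ex_RInt_scalR f a b k : ex_RInt f a b -> ex_RInt (fun x => k * f x) a b.
Proof. intros. exact (ex_RInt_scal f a b k H). Qed.
Lemma ex_RInt_constR a b (c : R) : ex_RInt (fun _ => c) a b.
Proof. apply ex_RInt_const. Qed.

Lemma RInt_le_const f a b c : a <= b -> ex_RInt f a b -> (forall x, a < x < b -> f x <= c) ->
  RInt f a b <= (b - a) * c.
Proof. intros. rewrite <- RInt_constR. apply RInt_le; auto. apply ex_RInt_constR. Qed.
Lemma RInt_ge_const f a b c : a <= b -> ex_RInt f a b -> (forall x, a < x < b -> c <= f x) ->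
  (b - a) * c <= RInt f a b.
Proof. intros. rewrite <- RInt_constR. apply RInt_le; auto. apply ex_RInt_constR. Qed.
Lemma RInt_abs_bound f a b c : a <= b -> ex_RInt f a b -> (forall x, a < x < b -> Rabs (f x) <= c) ->
  Rabs (RInt f a b) <= (b - a) * c.
Proof. intros Hab He H. 
  assert (H1 := RInt_le_const f a b c Hab He (fun x Hx => Rle_trans _ _ _ (Rle_abs _) (H x Hx))).
  assert (H2 : (b - a) * (- c) <= RInt f a b).
  { apply RInt_ge_const; auto. intros x Hx. specialize (H x Hx). revert H; unfold Rabs; destruct Rcase_abs; lra. }
  unfold Rabs; destruct Rcase_abs; lra.
Qed.

Lemma ftc a b F f : a < b -> scont a b F -> scont a b f ->
  (forall x, a < x < b -> is_derive F x (f x)) -> RInt f a b = F b - F a.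
Proof.
  intros Hab HF Hf Hd.
  set (fc := fun x => f (clamp a b x)).
  assert (Hfc : forall z, continuous fc z) by (intros; apply scont_clamp_c; auto; lra).
  assert (Hex : forall u v, ex_RInt fc u v) by (intros; apply (ex_RInt_continuous (V:=R_CompleteNormedModule)); auto).
  set (G := fun x => RInt fc a x).
  assert (HG : forall x, is_derive G x (fc x)).
  { intros x. apply (is_derive_RInt (V:=R_CompleteNormedModule) fc G a x).
    apply locally_R. exists 1; split; [lra|]. intros y _. apply (RInt_correct (V:=R_CompleteNormedModule)). apply Hex.
    apply Hfc. }
  destruct (mvt_open (fun x => F (clamp a b x) - G x) (fun _ => 0) a b Hab) as [c [Hc Heq]].
  { intros x Hx. apply continuity_pt_minus. apply scont_clamp_pt; auto; lra.
    apply derive_cont with (fc x). auto. }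
  { intros x Hx. replace 0 with (f x - fc x).
    2:{ unfold fc. rewrite clamp_id; lra. }
    apply (is_derive_minus (fun x => F (clamp a b x)) G). 2: apply HG.
    apply is_derive_ext_loc with F; auto.
    apply locally_R. exists (Rmin (x - a) (b - x)). split.
    { apply Rmin_case; lra. }
    intros y Hy. rewrite clamp_id; auto. revert Hy. unfold Rmin; destruct Rle_dec; unfold Rabs; destruct Rcase_abs; intros; lra. }
  rewrite !clamp_id in Heq by lra.
  assert (G a = 0) by (unfold G; rewrite RInt_point; reflexivity).
  assert (RInt f a b = G b).
  { unfold G. apply RInt_ext. intros x Hx. rewrite Rmin_left in Hx by lra. rewrite Rmax_right in Hx by lra.
    unfold fc. rewrite clamp_id; lra. }
  lra.
Qed.

Lemma RInt_pos_pt f a b x0 : a < b -> scont a b f -> (forall x, a <= x <= b -> 0 <= f x) ->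
  a <= x0 <= b -> 0 < f x0 -> 0 < RInt f a b.
Proof.
  intros Hab Hf Hpos Hx0 Hfx0.
  destruct (Hf x0 Hx0 (f x0 / 2) ltac:(lra)) as [d [Hd H]].
  set (fc := fun x => f (clamp a b x)).
  assert (Hfc : forall z, continuous fc z) by (intros; apply scont_clamp_c; auto; lra).
  assert (Hex : forall u v, ex_RInt fc u v) by (intros; apply (ex_RInt_continuous (V:=R_CompleteNormedModule)); auto).
  assert (Heq : RInt f a b = RInt fc a b).
  { apply RInt_ext. intros x Hx. rewrite Rmin_left in Hx by lra. rewrite Rmax_right in Hx by lra.
    unfold fc. rewrite clamp_id; lra. }
  set (al := Rmax a (x0 - d/2)). set (be := Rmin b (x0 + d/2)).
  assert (Hal : a <= al <= x0) by (unfold al, Rmax; destruct Rle_dec; lra).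
  assert (Hbe : x0 <= be <= b) by (unfold be, Rmin; destruct Rle_dec; lra).
  assert (Halbe : al < be).
  { unfold al, be. unfold Rmax, Rmin. repeat destruct Rle_dec; lra. }
  rewrite Heq.
  rewrite <- (RInt_Chasles fc a al b) by auto.
  rewrite <- (RInt_Chasles fc al be b) by auto.
  change (plus ?x ?y) with (x + y).
  assert (0 <= RInt fc a al).
  { replace 0 with ((al - a) * 0) by ring. apply RInt_ge_const; auto; try lra.
    intros x Hx. unfold fc. apply Hpos. apply clamp_in; lra. }
  assert (0 <= RInt fc be b).
  { replace 0 with ((b - be) * 0) by ring. apply RInt_ge_const; auto; try lra.
    intros x Hx. unfold fc. apply Hpos. apply clamp_in; lra. }
  assert ((be - al) * (f x0 / 2) <= RInt fc al be).
  { apply RInt_ge_const; auto; try lra.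
    intros x Hx. unfold fc. rewrite clamp_id by lra.
    assert (Hxx : Rabs (x - x0) < d).
    { assert (x0 - d/2 <= al) by (unfold al; apply Rmax_r).
      assert (be <= x0 + d/2) by (unfold be; apply Rmin_r).
      unfold Rabs; destruct Rcase_abs; lra. }
    specialize (H x ltac:(lra) Hxx). revert H; unfold Rabs; destruct Rcase_abs; lra. }
  assert (0 < (be - al) * (f x0 / 2)) by (apply Rmult_lt_0_compat; lra).
  change (plus ?x ?y) with (x + y). lra.
Qed.

Definition rcont (a b c d : R) (f : R -> R -> R) : Prop :=
  forall t x, a <= t <= b -> c <= x <= d -> forall e, 0 < e -> exists del, 0 < del /\
    forall s y, a <= s <= b -> c <= y <= d -> Rabs (s - t) < del -> Rabs (y - x) < del ->
      Rabs (f s y - f t x) < e.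

Definition unif2 (a b c d : R) (f : R -> R -> R) : Prop :=
  forall e, 0 < e -> exists del, 0 < del /\ forall t s x y,
    a <= t <= b -> a <= s <= b -> c <= x <= d -> c <= y <= d ->
    Rabs (t - s) < del -> Rabs (x - y) < del -> Rabs (f t x - f s y) < e.

Lemma heine2 a b c d f : rcont a b c d f -> unif2 a b c d f.
Proof.
  intros Hf e He.
  assert (Hex : forall p : Compactness.Tn 2 R, exists dd : posreal,
    let '(p1, (p2, _)) := p in
    a <= p1 <= b -> c <= p2 <= d -> forall s y, a <= s <= b -> c <= y <= d ->
      Rabs (s - p1) < 2 * dd -> Rabs (y - p2) < 2 * dd -> Rabs (f s y - f p1 p2) < e / 2).
  { intros [p1 [p2 []]].
    destruct (classic (a <= p1 <= b /\ c <= p2 <= d)) as [[H1 H2]|Hn].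
    - destruct (Hf p1 p2 H1 H2 (e/2) ltac:(lra)) as [dd [Hdd H]].
      exists (mkposreal (dd/2) ltac:(lra)). simpl. intros _ _ s y Hs Hy Hs' Hy'.
      apply H; auto; lra.
    - exists (mkposreal 1 Rlt_0_1). intros H1 H2. exfalso; auto. }
  set (delta := fun p => proj1_sig (constructive_indefinite_description _ (Hex p))).
  assert (Hdelta : forall p, let '(p1, (p2, _)) := p in
    a <= p1 <= b -> c <= p2 <= d -> forall s y, a <= s <= b -> c <= y <= d ->
      Rabs (s - p1) < 2 * delta p -> Rabs (y - p2) < 2 * delta p -> Rabs (f s y - f p1 p2) < e / 2).
  { intros p. unfold delta. destruct (constructive_indefinite_description _ (Hex p)) as [dd Hdd]. simpl. exact Hdd. }
  destruct (compactness_value 2 (a, (c, tt)) (b, (d, tt)) delta) as [dl Hdl].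
  exists dl; split; [apply cond_pos|].
  intros t s x y Ht Hs Hx Hy Hts Hxy.
  specialize (Hdl (t, (x, tt)) ltac:(simpl; auto)).
  apply NNPP; intro Hn; apply Hdl; intros [[p1 [p2 []]] [Hb [Hc Hle]]].
  apply Hn. simpl in Hb, Hc. destruct Hb as [Hp1 [Hp2 _]]. destruct Hc as [C1 [C2 _]].
  specialize (Hdelta (p1, (p2, tt)) Hp1 Hp2). simpl in Hdelta.
  pose proof (cond_pos (delta (p1, (p2, tt)))).
  cbn [Compactness.Tn] in *.
  assert (A1 := Hdelta t x Ht Hx ltac:(lra) ltac:(lra)).
  assert (A2 := Hdelta s y Hs Hy).
  assert (Rabs (s - p1) < 2 * delta (p1, (p2, tt))).
  { replace (s - p1) with ((s - t) + (t - p1)) by ring. eapply Rle_lt_trans. apply Rabs_triang.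
    rewrite <- Rabs_Ropp in Hts. replace (- (t - s)) with (s - t) in Hts by ring. pose proof (Rplus_lt_compat _ _ _ _ (Rlt_le_trans _ _ _ Hts Hle) C1). lra. }
  assert (Rabs (y - p2) < 2 * delta (p1, (p2, tt))).
  { replace (y - p2) with ((y - x) + (x - p2)) by ring. eapply Rle_lt_trans. apply Rabs_triang.
    rewrite <- Rabs_Ropp in Hxy. replace (- (x - y)) with (y - x) in Hxy by ring. lra. }
  specialize (A2 H0 H1).
  replace (f t x - f s y) with ((f t x - f p1 p2) - (f s y - f p1 p2)) by ring.
  eapply Rle_lt_trans. apply Rabs_triang. rewrite Rabs_Ropp. lra.
Qed.

Lemma unif2_scont a b c d f t : unif2 a b c d f -> a <= t <= b -> scont c d (f t).
Proof.
  intros Hf Ht x Hx e He. destruct (Hf e He) as [del [Hd H]]. exists del; split; auto.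
  intros y Hy Hyx. apply H; auto. rewrite Rminus_diag, Rabs_R0; auto.
Qed.

Lemma evt2 a b c d f : a <= b -> c <= d -> unif2 a b c d f ->
  exists t0 x0, a <= t0 <= b /\ c <= x0 <= d /\
    forall t x, a <= t <= b -> c <= x <= d -> f t x <= f t0 x0.
Proof.
  intros Hab Hcd Hf.
  assert (Hex : forall t, exists x, a <= t <= b -> c <= x <= d /\ forall y, c <= y <= d -> f t y <= f t x).
  { intros t. destruct (classic (a <= t <= b)) as [Ht|Hn].
    - destruct (evt1 c d (f t) Hcd (unif2_scont a b c d f t Hf Ht)) as [x [Hx H]]. exists x; auto.
    - exists c. intros; exfalso; auto. }
  set (X := fun t => proj1_sig (constructive_indefinite_description _ (Hex t))).
  assert (HX : forall t, a <= t <= b -> c <= X t <= d /\ forall y, c <= y <= d -> f t y <= f t (X t)).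
  { intros t. unfold X. destruct (constructive_indefinite_description _ (Hex t)) as [x Hx]. exact Hx. }
  assert (HF : scont a b (fun t => f t (X t))).
  { intros t Ht e He. destruct (Hf e He) as [del [Hd H]]. exists del; split; auto.
    intros s Hs Hst. destruct (HX t Ht) as [Xt Ht']. destruct (HX s Hs) as [Xs Hs'].
    assert (A1 := H s t (X t) (X t) Hs Ht Xt Xt Hst ltac:(rewrite Rminus_diag, Rabs_R0; auto)).
    assert (A2 := H t s (X s) (X s) Ht Hs Xs Xs ltac:(rewrite <- Rabs_Ropp; replace (-(t-s)) with (s-t) by ring; auto)
       ltac:(rewrite Rminus_diag, Rabs_R0; auto)).
    specialize (Ht' (X s) Xs). specialize (Hs' (X t) Xt).
    revert A1 A2; unfold Rabs; repeat destruct Rcase_abs; intros; lra. }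
  destruct (evt1 a b _ Hab HF) as [t0 [Ht0 H0]].
  exists t0, (X t0). destruct (HX t0 Ht0) as [Xt0 _]. split; auto; split; auto.
  intros t x Ht Hx. eapply Rle_trans. apply (proj2 (HX t Ht)); auto. apply H0; auto.
Qed.

Definition unif3 (a b c d g h : R) (f : R -> R -> R -> R) : Prop :=
  forall e, 0 < e -> exists del, 0 < del /\ forall t s x x' y y',
    a <= t <= b -> a <= s <= b -> c <= x <= d -> c <= x' <= d -> g <= y <= h -> g <= y' <= h ->
    Rabs (t - s) < del -> Rabs (x - x') < del -> Rabs (y - y') < del -> Rabs (f t x y - f s x' y') < e.

Lemma evt3 a b c d g h f : a <= b -> c <= d -> g <= h -> unif3 a b c d g h f ->
  exists t0 x0 y0, a <= t0 <= b /\ c <= x0 <= d /\ g <= y0 <= h /\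
    forall t x y, a <= t <= b -> c <= x <= d -> g <= y <= h -> f t x y <= f t0 x0 y0.
Proof.
  intros Hab Hcd Hgh Hf.
  assert (Hex : forall t, exists p : R * R, a <= t <= b -> c <= fst p <= d /\ g <= snd p <= h /\
     forall x y, c <= x <= d -> g <= y <= h -> f t x y <= f t (fst p) (snd p)).
  { intros t. destruct (classic (a <= t <= b)) as [Ht|Hn].
    - destruct (evt2 c d g h (f t) Hcd Hgh) as [x [y [Hx [Hy H]]]].
      { intros e He. destruct (Hf e He) as [del [Hd H]]. exists del; split; auto.
        intros. apply H; auto. rewrite Rminus_diag, Rabs_R0; auto. }
      exists (x, y); simpl; auto.
    - exists (c, g). intros; exfalso; auto. }
  set (X := fun t => proj1_sig (constructive_indefinite_description _ (Hex t))).
  assert (HX : forall t, a <= t <= b -> c <= fst (X t) <= d /\ g <= snd (X t) <= h /\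
     forall x y, c <= x <= d -> g <= y <= h -> f t x y <= f t (fst (X t)) (snd (X t))).
  { intros t. unfold X. destruct (constructive_indefinite_description _ (Hex t)) as [x Hx]. exact Hx. }
  assert (HF : scont a b (fun t => f t (fst (X t)) (snd (X t)))).
  { intros t Ht e He. destruct (Hf e He) as [del [Hd H]]. exists del; split; auto.
    intros s Hs Hst. destruct (HX t Ht) as [Xt [Yt Ht']]. destruct (HX s Hs) as [Xs [Ys Hs']].
    assert (A1 := H s t _ _ _ _ Hs Ht Xt Xt Yt Yt Hst ltac:(rewrite Rminus_diag, Rabs_R0; auto)
       ltac:(rewrite Rminus_diag, Rabs_R0; auto)).
    assert (A2 := H t s _ _ _ _ Ht Hs Xs Xs Ys Ys ltac:(rewrite <- Rabs_Ropp; replace (-(t-s)) with (s-t) by ring; auto)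
       ltac:(rewrite Rminus_diag, Rabs_R0; auto) ltac:(rewrite Rminus_diag, Rabs_R0; auto)).
    specialize (Ht' _ _ Xs Ys). specialize (Hs' _ _ Xt Yt).
    revert A1 A2; unfold Rabs; repeat destruct Rcase_abs; intros; lra. }
  destruct (evt1 a b _ Hab HF) as [t0 [Ht0 H0]].
  exists t0, (fst (X t0)), (snd (X t0)). destruct (HX t0 Ht0) as [Xt0 [Yt0 _]]. split; auto; split; auto; split; auto.
  intros t x y Ht Hx Hy. eapply Rle_trans. apply (proj2 (proj2 (HX t Ht))); auto. apply H0; auto.
Qed.

Lemma rcont_t_scont a b c d f t : rcont a b c d f -> a <= t <= b -> scont c d (f t).
Proof. intros Hf Ht x Hx e He. destruct (Hf t x Ht Hx e He) as [del [Hd H]]. exists del; split; auto.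
  intros. apply H; auto. rewrite Rminus_diag, Rabs_R0; auto. Qed.
Lemma rcont_x_scont a b c d f x : rcont a b c d f -> c <= x <= d -> scont a b (fun t => f t x).
Proof. intros Hf Hx t Ht e He. destruct (Hf t x Ht Hx e He) as [del [Hd H]]. exists del; split; auto.
  intros. apply H; auto. rewrite Rminus_diag, Rabs_R0; auto. Qed.
Lemma unif2_x_scont a b c d f x : unif2 a b c d f -> c <= x <= d -> scont a b (fun t => f t x).
Proof. intros Hf Hx t Ht e He. destruct (Hf e He) as [del [Hd H]]. exists del; split; auto.
  intros. apply H; auto. rewrite Rminus_diag, Rabs_R0; auto. Qed.

Definition rc2 a b c d (f : R -> R -> R) := fun u v => f (clamp a b u) (clamp c d v).

Lemma rcont_2d a b c d f : a <= b -> c <= d -> rcont a b c d f -> forall x y, continuity_2d_pt (rc2 a b c d f) x y.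
Proof.
  intros Hab Hcd Hf x y eps.
  destruct (Hf (clamp a b x) (clamp c d y) (clamp_in _ _ _ Hab) (clamp_in _ _ _ Hcd) eps (cond_pos eps)) as [del [Hd H]].
  exists (mkposreal del Hd). intros u v Hu Hv. simpl in Hu, Hv. unfold rc2.
  apply H; try apply clamp_in; auto; eapply Rle_lt_trans; try apply clamp_lip; auto.
Qed.

Lemma rcont_of_2d a b c d f F : (forall x y, a <= x <= b -> c <= y <= d -> f x y = F x y) ->
  (forall x y, a <= x <= b -> c <= y <= d -> continuity_2d_pt F x y) -> rcont a b c d f.
Proof.
  intros Heq Hc t x Ht Hx e He. destruct (Hc t x Ht Hx (mkposreal e He)) as [del H].
  exists del; split; [apply cond_pos|]. intros s y Hs Hy H1 H2. rewrite !Heq by auto. apply (H s y H1 H2).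
Qed.

Lemma rc2_id a b c d f x y : a <= x <= b -> c <= y <= d -> rc2 a b c d f x y = f x y.
Proof. intros; unfold rc2; rewrite !clamp_id; auto. Qed.

Lemma rcont_mult a b c d f g : a <= b -> c <= d -> rcont a b c d f -> rcont a b c d g ->
  rcont a b c d (fun t x => f t x * g t x).
Proof. intros Hab Hcd Hf Hg. apply rcont_of_2d with (fun u v => rc2 a b c d f u v * rc2 a b c d g u v).
  intros; rewrite !rc2_id; auto. intros; apply continuity_2d_pt_mult; apply rcont_2d; auto. Qed.
Lemma rcont_plus a b c d f g : a <= b -> c <= d -> rcont a b c d f -> rcont a b c d g ->
  rcont a b c d (fun t x => f t x + g t x).
Proof. intros Hab Hcd Hf Hg. apply rcont_of_2d with (fun u v => rc2 a b c d f u v + rc2 a b c d g u v).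
  intros; rewrite !rc2_id; auto. intros; apply continuity_2d_pt_plus; apply rcont_2d; auto. Qed.
Lemma rcont_comp a b c d f g : a <= b -> c <= d -> rcont a b c d f -> (forall z, continuity_pt g z) ->
  rcont a b c d (fun t x => g (f t x)).
Proof. intros Hab Hcd Hf Hg. apply rcont_of_2d with (fun u v => g (rc2 a b c d f u v)).
  intros; rewrite !rc2_id; auto. intros; apply continuity_1d_2d_pt_comp; auto; apply rcont_2d; auto. Qed.

Lemma rect_closure T L f B : 0 < T -> 0 < L -> rcont 0 T 0 L f ->
  (forall t x, 0 < t < T -> 0 < x < L -> f t x <= B) ->
  forall t x, 0 <= t <= T -> 0 <= x <= L -> f t x <= B.
Proof.
  intros HT HL Hf HB t x Ht Hx. apply Rnot_lt_le; intro Hlt.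
  destruct (Hf t x Ht Hx (f t x - B) ltac:(lra)) as [del [Hd H]].
  set (lam := Rmin (1/2) (del / (2 * (T + L)))).
  assert (Hlam : 0 < lam <= 1/2).
  { unfold lam. split. apply Rmin_case; [lra|]. apply Rdiv_lt_0_compat; lra. apply Rmin_l. }
  assert (Hlam2 : lam * (T + L) < del).
  { assert (lam <= del / (2 * (T + L))) by (unfold lam; apply Rmin_r).
    apply Rle_lt_trans with (del / (2 * (T + L)) * (T + L)).
    apply Rmult_le_compat_r; lra. replace (del / (2 * (T + L)) * (T + L)) with (del / 2) by (field; lra). lra. }
  set (s := (1 - lam) * t + lam * (T / 2)). set (y := (1 - lam) * x + lam * (L / 2)).
  assert (Hs : 0 < s < T).
  { unfold s. split; nra. }
  assert (Hy : 0 < y < L).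
  { unfold y. split; nra. }
  assert (Hst : Rabs (s - t) < del).
  { unfold s. replace ((1 - lam) * t + lam * (T / 2) - t) with (lam * (T/2 - t)) by ring.
    rewrite Rabs_mult, Rabs_right by lra. apply Rle_lt_trans with (lam * (T + L)); auto.
    apply Rmult_le_compat_l; [lra|]. unfold Rabs; destruct Rcase_abs; lra. }
  assert (Hyx : Rabs (y - x) < del).
  { unfold y. replace ((1 - lam) * x + lam * (L / 2) - x) with (lam * (L/2 - x)) by ring.
    rewrite Rabs_mult, Rabs_right by lra. apply Rle_lt_trans with (lam * (T + L)); auto.
    apply Rmult_le_compat_l; [lra|]. unfold Rabs; destruct Rcase_abs; lra. }
  specialize (H s y ltac:(lra) ltac:(lra) Hst Hyx). specialize (HB s y Hs Hy).
  revert H; unfold Rabs; destruct Rcase_abs; lra.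
Qed.

Lemma rcont_abs a b c d f : rcont a b c d f -> rcont a b c d (fun t x => Rabs (f t x)).
Proof. intros Hf t x Ht Hx e He. destruct (Hf t x Ht Hx e He) as [del [Hd H]]. exists del; split; auto.
  intros. eapply Rle_lt_trans. apply Rabs_triang_inv2. auto. Qed.

Lemma leibniz a b c d f ft : a < b -> c < d ->
  (forall t, a <= t <= b -> scont c d (f t)) -> unif2 a b c d ft ->
  (forall t x, a < t < b -> c < x < d -> is_derive (fun s => f s x) t (ft t x)) ->
  forall t, a < t < b -> is_derive (fun s => RInt (f s) c d) t (RInt (ft t) c d).
Proof.
  intros Hab Hcd Hf Hft Hd t Ht.
  apply is_derive_Reals. intros eps Heps.
  destruct (Hft (eps / (2 * (d - c))) ltac:(apply Rdiv_lt_0_compat; lra)) as [d1 [Hd1 H1]].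
  set (del := Rmin d1 (Rmin (t - a) (b - t))).
  assert (Hdel : 0 < del) by (unfold del; repeat apply Rmin_case; lra).
  exists (mkposreal del Hdel). intros h Hh0 Hh. simpl in Hh.
  assert (Hh1 : Rabs h < d1) by (eapply Rlt_le_trans; [apply Hh| unfold del; apply Rmin_l]).
  assert (Hh2 : a < t + h < b).
  { assert (del <= t - a) by (unfold del; eapply Rle_trans; [apply Rmin_r|apply Rmin_l]).
    assert (del <= b - t) by (unfold del; eapply Rle_trans; [apply Rmin_r|apply Rmin_r]).
    revert Hh; unfold Rabs; destruct Rcase_abs; intros; lra. }
  assert (Ex1 : ex_RInt (f (t + h)) c d) by (apply scont_exRInt; [lra|apply Hf; lra]).
  assert (Ex2 : ex_RInt (f t) c d) by (apply scont_exRInt; [lra|apply Hf; lra]).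
  assert (Ex3 : ex_RInt (ft t) c d) by (apply scont_exRInt; [lra|apply (unif2_scont a b); auto; lra]).
  assert (Heq : RInt (f (t + h)) c d - RInt (f t) c d - h * RInt (ft t) c d =
     RInt (fun x => f (t + h) x - f t x - h * ft t x) c d).
  { rewrite RInt_minusR, RInt_minusR, RInt_scalR; auto.
    apply ex_RInt_minusR; auto. apply ex_RInt_scalR; auto. }
  assert (Hbd : Rabs (RInt (fun x => f (t + h) x - f t x - h * ft t x) c d) <= (d - c) * (Rabs h * (eps / (2 * (d - c))))).
  { apply RInt_abs_bound; [lra| |].
    { apply ex_RInt_minusR. apply ex_RInt_minusR; auto. apply ex_RInt_scalR; auto. }
    intros x Hx.
    destruct (MVT_gen (fun s => f s x) t (t + h) (fun s => ft s x)) as [xi [Hxi Hmvt]].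
    { intros s Hs. apply Hd; auto. revert Hs. unfold Rmin, Rmax; destruct Rle_dec; lra. }
    { intros s Hs. apply derive_cont with (ft s x). apply Hd; auto. revert Hs. unfold Rmin, Rmax; destruct Rle_dec; lra. }
    simpl in Hmvt. rewrite Hmvt. replace (t + h - t) with h by ring.
    replace (ft xi x * h - h * ft t x) with (h * (ft xi x - ft t x)) by ring.
    assert (Hxi1 : a <= xi <= b) by (revert Hxi; unfold Rmin, Rmax; destruct Rle_dec; lra).
    assert (Hxi2 : Rabs (xi - t) < d1) by (revert Hxi Hh1; unfold Rmin, Rmax; destruct Rle_dec; unfold Rabs; repeat destruct Rcase_abs; intros; lra).
    rewrite Rabs_mult. apply Rmult_le_compat_l; [apply Rabs_pos|]. left. apply H1; try lra.
    rewrite Rminus_diag, Rabs_R0; auto. }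
  rewrite <- Heq in Hbd.
  replace ((d - c) * (Rabs h * (eps / (2 * (d - c))))) with (Rabs h * (eps / 2)) in Hbd by (field; lra).
  assert (Hhp : 0 < Rabs h) by (apply Rabs_pos_lt; auto).
  replace ((RInt (f (t + h)) c d - RInt (f t) c d) / h - RInt (ft t) c d) with
    ((RInt (f (t + h)) c d - RInt (f t) c d - h * RInt (ft t) c d) / h) by (field; auto).
  unfold Rdiv. rewrite Rabs_mult, Rabs_inv.
  apply Rle_lt_trans with (Rabs h * (eps / 2) * / Rabs h).
  apply Rmult_le_compat_r; auto. left; apply Rinv_0_lt_compat; auto.
  replace (Rabs h * (eps / 2) * / Rabs h) with (eps / 2) by (field; lra). lra.
Qed.

Lemma int_cont a b c d f : a <= b -> c < d -> unif2 a b c d f -> scont a b (fun s => RInt (f s) c d).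
Proof.
  intros Hab Hcd Hf t Ht e He.
  destruct (Hf (e / (2 * (d - c))) ltac:(apply Rdiv_lt_0_compat; lra)) as [del [Hd H]].
  exists del; split; auto. intros s Hs Hst.
  rewrite <- RInt_minusR by (apply scont_exRInt; [lra|apply (unif2_scont a b); auto]).
  eapply Rle_lt_trans. apply RInt_abs_bound with (c := e / (2 * (d - c))); [lra| |].
  apply ex_RInt_minusR; (apply scont_exRInt; [lra|apply (unif2_scont a b); auto]).
  intros x Hx. left. apply H; auto; try lra. rewrite Rminus_diag, Rabs_R0; auto.
  replace ((d - c) * (e / (2 * (d - c)))) with (e / 2) by (field; lra). lra.
Qed.

Lemma scont_sub a b a' b' f : scont a b f -> a <= a' -> b' <= b -> scont a' b' f.
Proof. intros Hf H1 H2 x Hx e He. destruct (Hf x ltac:(lra) e He) as [d [Hd H]]. exists d; split; auto.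
  intros. apply H; auto; lra. Qed.

Lemma is_derive_minusR f g x df dg : is_derive f x df -> is_derive g x dg -> is_derive (fun y => f y - g y) x (df - dg).
Proof. intros. exact (is_derive_minus f g x df dg H H0). Qed.
Lemma is_derive_plusR f g x df dg : is_derive f x df -> is_derive g x dg -> is_derive (fun y => f y + g y) x (df + dg).
Proof. intros. exact (is_derive_plus f g x df dg H H0). Qed.
Lemma is_derive_constR (c x : R) : @is_derive R_AbsRing R_NormedModule (fun _ : R => c) x 0.
Proof. apply (is_derive_const (V:=R_NormedModule) c x). Qed.
Lemma is_derive_idR (x : R) : is_derive (fun y : R => y) x 1.
Proof. apply (is_derive_id x). Qed.
Lemma is_derive_scalR f x k df : is_derive f x df -> is_derive (fun y => k * f y) x (k * df).
Proof. intros. exact (is_derive_scal f x k df H). Qed.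
Lemma is_derive_multR f g x df dg : is_derive f x df -> is_derive g x dg -> is_derive (fun y => f y * g y) x (df * g x + f x * dg).
Proof. intros. apply (is_derive_mult f g x df dg H H0). intros; apply Rmult_comm. Qed.
Lemma is_derive_shift (f : R -> R) (a s l : R) : is_derive f (a + s) l -> is_derive (fun z => f (a + z)) s l.
Proof.
  intros H. replace l with (1 * l) by ring.
  apply (is_derive_comp f (fun z => a + z) s l 1); auto.
  replace 1 with (0 + 1) by ring. apply is_derive_plusR. apply is_derive_constR. apply is_derive_idR.
Qed.
Lemma is_derive_refl (f : R -> R) (L x l : R) : is_derive f (L - x) l -> is_derive (fun z => f (L - z)) x (- l).
Proof.
  intros H. replace (- l) with ((-1) * l) by ring.
  apply (is_derive_comp f (fun z => L - z) x l (-1)); auto.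
  replace (-1) with (0 - 1) by ring. apply is_derive_minusR. apply is_derive_constR. apply is_derive_idR.
Qed.

Lemma Rmax_lip x y x' y' d : Rabs (x - x') < d -> Rabs (y - y') < d -> Rabs (Rmax x y - Rmax x' y') < d.
Proof. unfold Rmax; repeat destruct Rle_dec; unfold Rabs; repeat destruct Rcase_abs; intros; lra. Qed.

Lemma grad_lip (T L r sig M K : R) (u ut ux uxx : R -> R -> R) :
  0 < T -> 0 < L -> 0 < r -> 0 <= sig -> 0 < M -> K < M ->
  (forall t x, 0 < t < T -> 0 < x < L ->
     is_derive (fun s => u s x) t (ut t x) /\
     is_derive (fun y => u t y) x (ux t x) /\
     is_derive (fun y => ux t y) x (uxx t x)) ->
  rcont 0 T 0 L u -> rcont 0 T 0 L ux ->
  (forall t, 0 < t < T -> ux t 0 = 0 /\ ux t L = 0) ->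
  (forall x y, 0 <= x <= y -> y <= L -> u T y - u T x <= K * (y - x)) ->
  (forall t x y, 0 < t < T -> 0 < x < L -> 0 < y < L -> ux t x = ux t y ->
     (ut t y - ut t x) + sig * (uxx t y - uxx t x) - r * (u t y - u t x) = 0) ->
  forall t x y, 0 < t < T -> 0 <= x <= y -> y <= L -> u t y - u t x <= M * (y - x).
Proof.
  intros HT HL Hr Hsig HM HKM Hder Hu Hux Hbc Hterm Hstr t x y Ht Hxy HyL.
  set (Phi := fun s x y => u s y - u s x - M * (y - x)).
  set (Psi := fun s x y => Phi s x (Rmax x y)).
  assert (Uu := heine2 _ _ _ _ _ Hu).
  assert (U3 : unif3 t T 0 L 0 L Psi).
  { intros e He. destruct (Uu (e / 4) ltac:(lra)) as [du [Hdu H]].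
    set (del := Rmin du (e / (4 * M))).
    assert (Hdel : 0 < del) by (unfold del; apply Rmin_case; auto; apply Rdiv_lt_0_compat; lra).
    assert (Hdel1 : del <= du) by apply Rmin_l.
    assert (Hdel2 : M * del <= e / 4).
    { assert (del <= e / (4 * M)) by apply Rmin_r.
      apply Rle_trans with (M * (e / (4 * M))). apply Rmult_le_compat_l; lra. right; field; lra. }
    exists del; split; auto. intros s s' x1 x1' y1 y1' Hs Hs' Hx1 Hx1' Hy1 Hy1' Hss Hxx Hyy.
    unfold Psi, Phi.
    assert (HY : Rabs (Rmax x1 y1 - Rmax x1' y1') < del) by (apply Rmax_lip; auto).
    assert (HY1 : 0 <= Rmax x1 y1 <= L) by (unfold Rmax; destruct Rle_dec; lra).
    assert (HY2 : 0 <= Rmax x1' y1' <= L) by (unfold Rmax; destruct Rle_dec; lra).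
    assert (A1 := H s s' _ _ ltac:(lra) ltac:(lra) HY1 HY2 ltac:(lra) ltac:(lra)).
    assert (A2 := H s s' x1 x1' ltac:(lra) ltac:(lra) Hx1 Hx1' ltac:(lra) ltac:(lra)).
    assert (A3 : M * Rabs (Rmax x1 y1 - Rmax x1' y1') <= M * del) by (apply Rmult_le_compat_l; lra).
    assert (A4 : M * Rabs (x1 - x1') <= M * del) by (apply Rmult_le_compat_l; lra).
    revert A1 A2 A3 A4. set (Y := Rmax x1 y1). set (Y' := Rmax x1' y1').
    unfold Rabs; repeat destruct Rcase_abs; intros; nra. }
  destruct (evt3 t T 0 L 0 L Psi ltac:(lra) ltac:(lra) ltac:(lra) U3) as [t0 [x0 [y0' [Ht0 [Hx0 [Hy0' Hmax3]]]]]].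
  set (y0 := Rmax x0 y0').
  assert (Hy0 : x0 <= y0 <= L) by (unfold y0, Rmax; destruct Rle_dec; lra).
  assert (Hmax : forall s x' y', t <= s <= T -> 0 <= x' <= y' -> y' <= L -> Phi s x' y' <= Phi t0 x0 y0).
  { intros s x' y' Hs Hx' Hy'. specialize (Hmax3 s x' y' Hs ltac:(lra) ltac:(lra)).
    unfold Psi in Hmax3. rewrite Rmax_right in Hmax3 by lra. exact Hmax3. }
  assert (Hgoal : Phi t x y <= Phi t0 x0 y0) by (apply Hmax; lra).
  cut (Phi t0 x0 y0 <= 0). { unfold Phi in *. intros; lra. }
  apply Rnot_lt_le; intro Hpos.
  assert (Hxy0 : x0 < y0).
  { destruct (Rle_lt_or_eq_dec x0 y0 (proj1 Hy0)) as [|He]; auto. exfalso.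
    unfold Phi in Hpos. rewrite He in Hpos. lra. }
  assert (Hu0 : M * (y0 - x0) < u t0 y0 - u t0 x0) by (unfold Phi in Hpos; lra).
  assert (Ht0T : t0 < T).
  { destruct (Rle_lt_or_eq_dec t0 T (proj2 Ht0)) as [|He]; auto. exfalso.
    rewrite He in Hu0. specialize (Hterm x0 y0 ltac:(lra) ltac:(lra)).
    assert (K * (y0 - x0) <= M * (y0 - x0)) by (apply Rmult_le_compat_r; lra). lra. }
  assert (Ht0' : 0 < t0 < T) by lra.
  assert (Hx0p : 0 < x0).
  { destruct (Rle_lt_or_eq_dec 0 x0 (proj1 Hx0)) as [|He]; auto. exfalso. subst x0.
    destruct (Hux t0 0 ltac:(lra) ltac:(lra) M HM) as [d [Hd H]].
    set (h := Rmin d y0 / 2).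
    assert (Hh : 0 < h /\ h < d /\ h < y0) by (unfold h; split; [apply Rmin_case; lra|split; [generalize (Rmin_l d y0)|generalize (Rmin_r d y0)]; lra]).
    destruct (mvt_s (u t0) (ux t0) 0 h ltac:(lra)) as [c [Hc Hmvt]].
    { apply scont_sub with 0 L. apply rcont_t_scont with 0 T; auto; lra. lra. lra. }
    { intros z Hz. apply (Hder t0 z Ht0' ltac:(lra)). }
    specialize (H t0 c ltac:(lra) ltac:(lra) ltac:(rewrite Rminus_diag, Rabs_R0; lra) ltac:(rewrite Rminus_0_r, Rabs_right; lra)).
    rewrite (proj1 (Hbc t0 Ht0')), Rminus_0_r in H.
    assert (ux t0 c < M) by (revert H; unfold Rabs; destruct Rcase_abs; lra).
    specialize (Hmax t0 h y0 ltac:(lra) ltac:(lra) ltac:(lra)).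
    unfold Phi in Hmax. rewrite Rminus_0_r in Hmvt.
    assert (ux t0 c * h < M * h) by (apply Rmult_lt_compat_r; lra). lra. }
  assert (Hy0L : y0 < L).
  { destruct (Rle_lt_or_eq_dec y0 L (proj2 Hy0)) as [|He]; auto. exfalso. rewrite He in *.
    destruct (Hux t0 L ltac:(lra) ltac:(lra) M HM) as [d [Hd H]].
    set (h := Rmin d (L - x0) / 2).
    assert (Hh : 0 < h /\ h < d /\ h < L - x0) by (unfold h; split; [apply Rmin_case; lra|split; [generalize (Rmin_l d (L - x0))|generalize (Rmin_r d (L - x0))]; lra]).
    destruct (mvt_s (u t0) (ux t0) (L - h) L ltac:(lra)) as [c [Hc Hmvt]].
    { apply scont_sub with 0 L. apply rcont_t_scont with 0 T; auto; lra. lra. lra. }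
    { intros z Hz. apply (Hder t0 z Ht0' ltac:(lra)). }
    specialize (H t0 c ltac:(lra) ltac:(lra) ltac:(rewrite Rminus_diag, Rabs_R0; lra) ltac:(unfold Rabs; destruct Rcase_abs; lra)).
    rewrite (proj2 (Hbc t0 Ht0')), Rminus_0_r in H.
    assert (ux t0 c < M) by (revert H; unfold Rabs; destruct Rcase_abs; lra).
    specialize (Hmax t0 x0 (L - h) ltac:(lra) ltac:(lra) ltac:(lra)).
    unfold Phi in Hmax. replace (L - (L - h)) with h in Hmvt by ring.
    assert (ux t0 c * h < M * h) by (apply Rmult_lt_compat_r; lra). lra. }
  assert (Dx : ux t0 x0 = M).
  { assert (Hd := deriv_max0 (fun z => Phi t0 z y0) x0 (0 - ux t0 x0 - M * (0 - 1)) (Rmin x0 (y0 - x0))).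
    cut (0 - ux t0 x0 - M * (0 - 1) = 0). { intros; lra. }
    apply Hd.
    - unfold Phi. apply is_derive_minusR. apply is_derive_minusR. apply is_derive_constR.
      apply (Hder t0 x0 Ht0' ltac:(lra)). apply is_derive_scalR. apply is_derive_minusR. apply is_derive_constR. apply is_derive_idR.
    - apply Rmin_case; lra.
    - intros z Hz. assert (Rabs (z - x0) < x0) by (eapply Rlt_le_trans; [apply Hz|apply Rmin_l]).
      assert (Rabs (z - x0) < y0 - x0) by (eapply Rlt_le_trans; [apply Hz|apply Rmin_r]).
      apply Hmax; [lra| |lra]. revert H H0; unfold Rabs; destruct Rcase_abs; lra. }
  assert (Dy : ux t0 y0 = M).
  { assert (Hd := deriv_max0 (fun z => Phi t0 x0 z) y0 (ux t0 y0 - 0 - M * (1 - 0)) (Rmin (L - y0) (y0 - x0))).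
    cut (ux t0 y0 - 0 - M * (1 - 0) = 0). { intros; lra. }
    apply Hd.
    - unfold Phi. apply is_derive_minusR. apply is_derive_minusR. 
      apply (Hder t0 y0 Ht0' ltac:(lra)). apply is_derive_constR. apply is_derive_scalR. apply is_derive_minusR. apply is_derive_idR. apply is_derive_constR.
    - apply Rmin_case; lra.
    - intros z Hz. assert (Rabs (z - y0) < L - y0) by (eapply Rlt_le_trans; [apply Hz|apply Rmin_l]).
      assert (Rabs (z - y0) < y0 - x0) by (eapply Rlt_le_trans; [apply Hz|apply Rmin_r]).
      apply Hmax; [lra| |]; revert H H0; unfold Rabs; destruct Rcase_abs; lra. }
  assert (D2 : uxx t0 y0 - uxx t0 x0 <= 0).
  { set (dd := Rmin x0 (L - y0)).
    assert (Hdd : 0 < dd) by (unfold dd; apply Rmin_case; lra).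
    assert (Hdd1 : dd <= x0) by apply Rmin_l. assert (Hdd2 : dd <= L - y0) by apply Rmin_r.
    apply (deriv2_max (fun s => u t0 (y0 + s) - u t0 (x0 + s) - M * (y0 - x0))
                      (fun s => ux t0 (y0 + s) - ux t0 (x0 + s) - 0) 0 dd); auto.
    - intros s Hs. rewrite Rminus_0_r in Hs.
      assert (-dd < s < dd) by (revert Hs; unfold Rabs; destruct Rcase_abs; lra).
      apply is_derive_minusR. apply is_derive_minusR.
      apply is_derive_shift. apply (Hder t0 (y0 + s) Ht0' ltac:(lra)).
      apply is_derive_shift. apply (Hder t0 (x0 + s) Ht0' ltac:(lra)).
      apply is_derive_constR.
    - replace (uxx t0 y0 - uxx t0 x0) with (uxx t0 (y0 + 0) - uxx t0 (x0 + 0) - 0) by (rewrite !Rplus_0_r; ring).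
      apply is_derive_minusR. apply is_derive_minusR.
      apply is_derive_shift. apply (Hder t0 (y0 + 0) Ht0' ltac:(lra)).
      apply is_derive_shift. apply (Hder t0 (x0 + 0) Ht0' ltac:(lra)).
      apply is_derive_constR.
    - intros s Hs. rewrite Rminus_0_r in Hs.
      assert (-dd < s < dd) by (revert Hs; unfold Rabs; destruct Rcase_abs; lra).
      rewrite !Rplus_0_r.
      specialize (Hmax t0 (x0 + s) (y0 + s) ltac:(lra) ltac:(lra) ltac:(lra)). unfold Phi in Hmax.
      replace (y0 + s - (x0 + s)) with (y0 - x0) in Hmax by ring. lra. }
  assert (Dt : ut t0 y0 - ut t0 x0 <= 0).
  { replace (ut t0 y0 - ut t0 x0) with (ut t0 y0 - ut t0 x0 - 0) by ring.
    apply (deriv_rmax (fun s => u s y0 - u s x0 - M * (y0 - x0)) t0 _ (T - t0)); [| lra |].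
    - apply is_derive_minusR. apply is_derive_minusR.
      apply (Hder t0 y0 Ht0' ltac:(lra)). apply (Hder t0 x0 Ht0' ltac:(lra)). apply is_derive_constR.
    - intros h Hh. specialize (Hmax (t0 + h) x0 y0 ltac:(lra) ltac:(lra) ltac:(lra)). unfold Phi in Hmax. lra. }
  specialize (Hstr t0 x0 y0 Ht0' ltac:(lra) ltac:(lra) ltac:(congruence)).
  assert (sig * (uxx t0 y0 - uxx t0 x0) <= 0) by (apply Rmult_le_0_l; lra).
  assert (0 < r * (u t0 y0 - u t0 x0)).
  { apply Rmult_lt_0_compat; auto. assert (0 < M * (y0 - x0)) by (apply Rmult_lt_0_compat; lra). lra. }
  lra.
Qed.

Definition qm (s : R) : R := Rmin s 0.
Definition hE (s : R) : R := - (qm s) ^ 3.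
Definition hE1 (s : R) : R := - (3 * (qm s) ^ 2).
Definition hE2 (s : R) : R := - (6 * qm s).

Lemma qm_neg s : s < 0 -> qm s = s.
Proof. intros; unfold qm, Rmin; destruct Rle_dec; lra. Qed.
Lemma qm_pos s : 0 <= s -> qm s = 0.
Proof. intros; unfold qm, Rmin; destruct Rle_dec; lra. Qed.

Lemma is_derive_compR (g f : R -> R) x dg df : is_derive g (f x) dg -> is_derive f x df ->
  is_derive (fun y => g (f y)) x (dg * df).
Proof. intros H1 H2. rewrite Rmult_comm. apply (is_derive_comp g f x dg df); auto. Qed.

Lemma d_qm2 s : is_derive (fun z => qm z ^ 2) s (2 * qm s).
Proof.
  destruct (Rlt_or_le s 0) as [Hs|Hs].
  - apply is_derive_ext_loc with (fun z => z ^ 2).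
    + apply locally_R. exists (- s); split; [lra|]. intros y Hy. rewrite qm_neg; auto.
      revert Hy; unfold Rabs; destruct Rcase_abs; lra.
    + rewrite qm_neg by auto. auto_derive; auto; ring.
  - destruct (Rle_lt_or_eq_dec 0 s Hs) as [Hs'|<-].
    + apply is_derive_ext_loc with (fun _ : R => 0 : R).
      * apply locally_R. exists s; split; [lra|]. intros y Hy. assert (0 <= y) by (revert Hy; unfold Rabs; destruct Rcase_abs; lra).
        rewrite qm_pos by auto. match goal with |- @eq _ ?a ?b => change (@eq R a b) end; ring.
      * rewrite qm_pos by lra. replace (2 * 0) with 0 by ring. apply is_derive_constR.
    + apply is_derive_Reals. intros e He. exists (mkposreal e He). intros h Hh0 Hh. simpl in Hh.
      rewrite Rplus_0_l, (qm_pos 0) by lra.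
      destruct (Rlt_or_le h 0) as [Hn|Hp].
      * rewrite qm_neg by auto. replace ((h ^ 2 - 0 ^ 2) / h - 2 * 0) with h by (field; lra). auto.
      * rewrite qm_pos by auto. replace ((0 ^ 2 - 0 ^ 2) / h - 2 * 0) with 0 by (field; lra).
        rewrite Rabs_R0; auto.
Qed.

Lemma d_qm3 s : is_derive (fun z => qm z ^ 3) s (3 * qm s ^ 2).
Proof.
  destruct (Rlt_or_le s 0) as [Hs|Hs].
  - apply is_derive_ext_loc with (fun z => z ^ 3).
    + apply locally_R. exists (- s); split; [lra|]. intros y Hy. rewrite qm_neg; auto.
      revert Hy; unfold Rabs; destruct Rcase_abs; lra.
    + rewrite qm_neg by auto. auto_derive; auto; ring.
  - destruct (Rle_lt_or_eq_dec 0 s Hs) as [Hs'|<-].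
    + apply is_derive_ext_loc with (fun _ : R => 0 : R).
      * apply locally_R. exists s; split; [lra|]. intros y Hy. assert (0 <= y) by (revert Hy; unfold Rabs; destruct Rcase_abs; lra).
        rewrite qm_pos by auto. match goal with |- @eq _ ?a ?b => change (@eq R a b) end; ring.
      * rewrite qm_pos by lra. replace (3 * 0 ^ 2) with 0 by ring. apply is_derive_constR.
    + apply is_derive_Reals. intros e He. exists (mkposreal (Rmin e 1) ltac:(apply Rmin_case; lra)).
      intros h Hh0 Hh. simpl in Hh.
      assert (Hh1 : Rabs h < e) by (eapply Rlt_le_trans; [apply Hh|apply Rmin_l]).
      assert (Hh2 : Rabs h < 1) by (eapply Rlt_le_trans; [apply Hh|apply Rmin_r]).
      rewrite Rplus_0_l, (qm_pos 0) by lra.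
      destruct (Rlt_or_le h 0) as [Hn|Hp].
      * rewrite qm_neg by auto. replace ((h ^ 3 - 0 ^ 3) / h - 3 * 0 ^ 2) with (h * h) by (field; lra).
        rewrite Rabs_mult. revert Hh1 Hh2; unfold Rabs; destruct Rcase_abs; intros; nra.
      * rewrite qm_pos by auto. replace ((0 ^ 3 - 0 ^ 3) / h - 3 * 0 ^ 2) with 0 by (field; lra).
        rewrite Rabs_R0; auto.
Qed.

Lemma d_hE s : is_derive hE s (hE1 s).
Proof. unfold hE, hE1. apply (is_derive_opp (fun z => qm z ^ 3)). apply d_qm3. Qed.
Lemma d_hE1 s : is_derive hE1 s (hE2 s).
Proof. unfold hE1, hE2. apply (is_derive_opp (fun z => 3 * qm z ^ 2)).
  replace (6 * qm s) with (3 * (2 * qm s)) by ring. apply is_derive_scalR. apply d_qm2. Qed.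

Lemma c_hE s : continuity_pt hE s.
Proof. apply derive_cont with (hE1 s). apply d_hE. Qed.
Lemma c_hE1 s : continuity_pt hE1 s.
Proof. apply derive_cont with (hE2 s). apply d_hE1. Qed.
Lemma c_hE2 s : continuity_pt hE2 s.
Proof.
  intros e He. exists (e / 6); split; [lra|]. intros y [_ Hy]. simpl in *. unfold R_dist in *.
  unfold hE2, qm. replace (- (6 * Rmin y 0) - - (6 * Rmin s 0)) with (- 6 * (Rmin y 0 - Rmin s 0)) by ring.
  rewrite Rabs_mult. rewrite Rabs_left by lra.
  assert (Rabs (Rmin y 0 - Rmin s 0) <= Rabs (y - s)).
  { unfold Rmin; repeat destruct Rle_dec; unfold Rabs; repeat destruct Rcase_abs; lra. }
  lra.
Qed.

Lemma hE_nonneg s : 0 <= hE s.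
Proof. unfold hE. destruct (Rlt_or_le s 0). rewrite qm_neg by auto. nra. rewrite qm_pos by auto. lra. Qed.
Lemma hE_pos s : s < 0 -> 0 < hE s.
Proof. intros. unfold hE. rewrite qm_neg by auto. replace (- s ^ 3) with ((- s) * (s * s)) by ring.
  apply Rmult_lt_0_compat; nra. Qed.
Lemma hE_zero s : 0 <= s -> hE s = 0.
Proof. intros. unfold hE. rewrite qm_pos by auto. match goal with |- @eq _ ?a ?b => change (@eq R a b) end; ring. Qed.

Lemma young_hE (sig2 G Gb a m : R) : 0 < sig2 -> Rabs G <= Gb ->
  - (hE2 m * a * (sig2 * a + G * m)) <= (3 * Gb ^ 2 / (2 * sig2)) * hE m.
Proof.
  intros Hs HG. unfold hE2, hE. destruct (Rlt_or_le m 0) as [Hm|Hm].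
  - rewrite qm_neg by auto. set (p := - m).
    assert (Hp : 0 < p) by (unfold p; lra).
    assert (HG2 : G ^ 2 <= Gb ^ 2).
    { assert (0 <= Rabs G) by apply Rabs_pos.
      rewrite <- (pow2_abs G). apply pow_incr. lra. }
    assert (H1 : 4 * sig2 * (G * p * a - sig2 * a ^ 2) <= G ^ 2 * p ^ 2).
    { assert (0 <= (G * p - 2 * sig2 * a) ^ 2) by apply pow2_ge_0. nra. }
    assert (H2 : G * p * a - sig2 * a ^ 2 <= Gb ^ 2 * p ^ 2 / (4 * sig2)).
    { apply Rmult_le_reg_l with (4 * sig2); [lra|].
      replace (4 * sig2 * (Gb ^ 2 * p ^ 2 / (4 * sig2))) with (Gb ^ 2 * p ^ 2) by (field; lra).
      assert (G ^ 2 * p ^ 2 <= Gb ^ 2 * p ^ 2) by (apply Rmult_le_compat_r; [apply pow2_ge_0|auto]). lra. }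
    replace m with (- p) by (unfold p; ring).
    replace (- (- (6 * - p) * a * (sig2 * a + G * - p))) with (6 * p * (G * p * a - sig2 * a ^ 2)) by ring.
    replace (3 * Gb ^ 2 / (2 * sig2) * - (- p) ^ 3) with (6 * p * (Gb ^ 2 * p ^ 2 / (4 * sig2))) by (field; lra).
    apply Rmult_le_compat_l; lra.
  - rewrite qm_pos by auto. replace (- (- (6 * 0) * a * (sig2 * a + G * m))) with 0 by ring.
    replace (- 0 ^ 3) with 0 by ring. lra.
Qed.

Lemma scont_exp_lin a b k : scont a b (fun s => exp (k * s)).
Proof. apply scont_of_pt with (fun s => exp (k * s)); auto. intros x _.
  apply derive_cont with (k * exp (k * x)). auto_derive; auto; ring. Qed.

Lemma RInt_zero_int f a b : a <= b -> (forall x, a < x < b -> f x = 0) -> RInt f a b = 0.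
Proof. intros Hab H. rewrite (RInt_ext f (fun _ => 0)). rewrite RInt_constR; 
  match goal with |- @eq _ ?a ?b => change (@eq R a b) end; ring.
  intros x Hx. rewrite Rmin_left in Hx by lra. rewrite Rmax_right in Hx by lra. auto. Qed.

Lemma m_lemma (T L sig2 Gb : R) (m mt mx mxx g gx : R -> R -> R) (m0 : R -> R) :
  0 < T -> 0 < L -> 0 < sig2 ->
  (forall t x, 0 < t < T -> 0 < x < L ->
     is_derive (fun s => m s x) t (mt t x) /\
     is_derive (fun y => m t y) x (mx t x) /\
     is_derive (fun y => mx t y) x (mxx t x)) ->
  rcont 0 T 0 L m -> rcont 0 T 0 L mt ->
  (forall t, 0 < t < T -> scont 0 L (mx t) /\ scont 0 L (mxx t) /\ scont 0 L (g t) /\ scont 0 L (gx t)) ->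
  (forall t x, 0 < t < T -> 0 < x < L -> is_derive (fun y => g t y) x (gx t x)) ->
  (forall t x, 0 < t < T -> 0 <= x <= L -> Rabs (g t x) <= Gb) ->
  (forall t x, 0 < t < T -> 0 < x < L ->
     mt t x = sig2 * mxx t x + (gx t x * m t x + g t x * mx t x)) ->
  (forall t, 0 < t < T -> sig2 * mx t 0 + g t 0 * m t 0 = 0 /\ sig2 * mx t L + g t L * m t L = 0) ->
  (forall x, 0 <= x <= L -> m 0 x = m0 x) -> (forall x, 0 <= x <= L -> 0 <= m0 x) ->
  RInt m0 0 L = 1 ->
  forall t, 0 <= t <= T -> (forall x, 0 <= x <= L -> 0 <= m t x) /\ RInt (m t) 0 L = 1.
Proof.
  intros HT HL Hs Hder Hm Hmt Hsc Hgd Hgb Hpde Hbc Hinit Hm0 Hmass t Ht.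
  assert (Um := heine2 _ _ _ _ _ Hm). assert (Umt := heine2 _ _ _ _ _ Hmt).
  assert (Hms : forall s, 0 <= s <= T -> scont 0 L (m s)) by (intros; apply rcont_t_scont with 0 T; auto).
  set (Fl := fun s x => sig2 * mx s x + g s x * m s x).
  set (Fx := fun s x => sig2 * mxx s x + (gx s x * m s x + g s x * mx s x)).
  assert (HFl : forall s, 0 < s < T -> scont 0 L (Fl s)).
  { intros s Hs'. destruct (Hsc s Hs') as [A [B [C D]]]. unfold Fl.
    apply scont_plus; try lra. apply scont_mult; auto; try lra. apply scont_const.
    apply scont_mult; auto; try lra. apply Hms; lra. }
  assert (HFx : forall s, 0 < s < T -> scont 0 L (Fx s)).
  { intros s Hs'. destruct (Hsc s Hs') as [A [B [C D]]]. unfold Fx.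
    apply scont_plus; try lra. apply scont_mult; auto; try lra. apply scont_const.
    apply scont_plus; try lra; apply scont_mult; auto; try lra; apply Hms; lra. }
  assert (HFd : forall s x, 0 < s < T -> 0 < x < L -> is_derive (Fl s) x (Fx s x)).
  { intros s x Hs' Hx. unfold Fl, Fx. destruct (Hder s x Hs' Hx) as [_ [D1 D2]].
    apply is_derive_plusR. apply is_derive_scalR; auto. apply is_derive_multR; auto. }
  assert (HFint : forall s, 0 < s < T -> RInt (Fx s) 0 L = 0).
  { intros s Hs'. rewrite (ftc 0 L (Fl s) (Fx s)); auto.
    unfold Fl. destruct (Hbc s Hs'). lra. }
  set (I := fun s => RInt (m s) 0 L).
  assert (HIc : scont 0 T I) by (apply int_cont; auto; lra).
  assert (HId : forall s, 0 < s < T -> is_derive I s 0).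
  { intros s Hs'. replace 0 with (RInt (mt s) 0 L).
    apply (leibniz 0 T 0 L m mt); auto; try lra.
    intros; apply Hder; auto.
    transitivity (RInt (Fx s) 0 L); [|apply HFint; auto]. apply RInt_ext. intros x Hx. rewrite Rmin_left in Hx by lra. rewrite Rmax_right in Hx by lra.
    apply Hpde; auto. }
  assert (HI0 : I 0 = 1).
  { unfold I. rewrite <- Hmass. apply RInt_ext. intros x Hx. rewrite Rmin_left in Hx by lra. rewrite Rmax_right in Hx by lra.
    apply Hinit; lra. }
  assert (HIt : I t = 1).
  { destruct (Rle_lt_or_eq_dec 0 t (proj1 Ht)) as [Htp|<-]; auto.
    destruct (mvt_s I (fun _ => 0) 0 t Htp) as [c [Hc Hmvt]].
    apply scont_sub with 0 T; auto; lra. intros; apply HId; lra. lra. }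
  split; [|exact HIt].
  destruct (Rle_lt_or_eq_dec 0 t (proj1 Ht)) as [Htp|<-].
  2:{ intros x Hx. rewrite Hinit by auto. apply Hm0; auto. }
  set (hm := fun s x => hE (m s x)).
  assert (Rh : rcont 0 T 0 L hm) by (apply rcont_comp; auto; try lra; apply c_hE).
  assert (Uh := heine2 _ _ _ _ _ Rh).
  set (ft := fun s x => hE1 (m s x) * mt s x).
  assert (Rft : rcont 0 T 0 L ft) by (apply rcont_mult; auto; try lra; apply rcont_comp; auto; try lra; apply c_hE1).
  assert (Uft := heine2 _ _ _ _ _ Rft).
  set (E := fun s => RInt (hm s) 0 L).
  assert (HEc : scont 0 T E) by (apply int_cont; auto; lra).
  assert (HEd : forall s, 0 < s < T -> is_derive E s (RInt (ft s) 0 L)).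
  { intros s Hs'. apply (leibniz 0 T 0 L hm ft); auto; try lra.
    intros; apply rcont_t_scont with 0 T; auto.
    intros s0 x Hs0 Hx. unfold hm, ft. apply is_derive_compR. apply d_hE. apply Hder; auto. }
  set (kap := 3 * Gb ^ 2 / (2 * sig2)).
  assert (HEi : forall s, 0 < s < T -> RInt (ft s) 0 L <= kap * E s).
  { intros s Hs'. destruct (Hsc s Hs') as [A [B [C D]]].
    assert (Hc1 : scont 0 L (fun x => hE1 (m s x))) by (apply scont_comp; try lra; [apply Hms; lra|apply c_hE1]).
    assert (Hc2 : scont 0 L (fun x => hE2 (m s x))) by (apply scont_comp; try lra; [apply Hms; lra|apply c_hE2]).
    assert (Heq1 : RInt (ft s) 0 L = RInt (fun x => hE1 (m s x) * Fx s x) 0 L).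
    { apply RInt_ext. intros x Hx. rewrite Rmin_left in Hx by lra. rewrite Rmax_right in Hx by lra.
      unfold ft, Fx. rewrite Hpde; auto. }
    set (Bf := fun x => hE2 (m s x) * mx s x * Fl s x).
    set (Cf := fun x => hE1 (m s x) * Fx s x).
    assert (SB : scont 0 L Bf) by (unfold Bf; apply scont_mult; try lra; auto; apply scont_mult; auto; lra).
    assert (SC : scont 0 L Cf) by (unfold Cf; apply scont_mult; try lra; auto).
    assert (Hsum : RInt (fun x => Bf x + Cf x) 0 L = 0).
    { rewrite (ftc 0 L (fun x => hE1 (m s x) * Fl s x)); auto.
      - unfold Fl. destruct (Hbc s Hs') as [B0 BL]. rewrite B0, BL. match goal with |- @eq _ ?a ?b => change (@eq R a b) end; ring.
      - apply scont_mult; auto; lra.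
      - apply scont_plus; auto; lra.
      - intros x Hx. unfold Bf, Cf.
        apply (is_derive_multR (fun y => hE1 (m s y)) (Fl s) x (hE2 (m s x) * mx s x) (Fx s x)); auto.
        apply (is_derive_compR hE1 (fun y => m s y)). apply d_hE1. apply Hder; auto. }
    rewrite RInt_plusR in Hsum by (apply scont_exRInt; auto; lra).
    rewrite Heq1. fold Cf.
    replace (RInt Cf 0 L) with (RInt (fun x => -1 * Bf x) 0 L) by (rewrite RInt_scalR by (apply scont_exRInt; auto; lra); lra).
    unfold E. rewrite <- RInt_scalR by (apply scont_exRInt; [lra|apply rcont_t_scont with 0 T; auto; lra]).
    apply RInt_le; [lra| | |].
    - apply ex_RInt_scalR; apply scont_exRInt; auto; lra.
    - apply ex_RInt_scalR; apply scont_exRInt; [lra|apply rcont_t_scont with 0 T; auto; lra].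
    - intros x Hx. unfold Bf, Fl, hm, kap.
      replace (-1 * (hE2 (m s x) * mx s x * (sig2 * mx s x + g s x * m s x))) with
        (- (hE2 (m s x) * mx s x * (sig2 * mx s x + g s x * m s x))) by ring.
      apply young_hE; auto. apply Hgb; auto; lra. }
  set (Z := fun s => exp (- kap * s) * E s).
  assert (HZc : scont 0 t Z).
  { apply scont_mult; try lra. apply scont_exp_lin. apply scont_sub with 0 T; auto; lra. }
  destruct (mvt_s Z (fun s => (- kap * exp (- kap * s)) * E s + exp (- kap * s) * RInt (ft s) 0 L) 0 t Htp HZc)
    as [c [Hc Hmvt]].
  { intros s Hs'. apply (is_derive_multR (fun s => exp (- kap * s)) E s (- kap * exp (- kap * s)) (RInt (ft s) 0 L)).
    auto_derive; auto; ring. apply HEd; lra. }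
  assert (HE0 : E 0 = 0).
  { unfold E, hm. apply RInt_zero_int; [lra|]. intros x Hx. rewrite Hinit by lra. apply hE_zero. apply Hm0; lra. }
  assert (HZ0 : Z 0 = 0) by (unfold Z; rewrite HE0; ring).
  assert (Hder_le : (- kap * exp (- kap * c)) * E c + exp (- kap * c) * RInt (ft c) 0 L <= 0).
  { specialize (HEi c ltac:(lra)). assert (0 < exp (- kap * c)) by apply exp_pos.
    replace ((- kap * exp (- kap * c)) * E c + exp (- kap * c) * RInt (ft c) 0 L) with
      (exp (- kap * c) * (RInt (ft c) 0 L - kap * E c)) by ring.
    apply Rmult_le_0_l; lra. }
  assert (HZt : Z t <= 0).
  { rewrite HZ0 in Hmvt. assert (X := Rmult_le_compat_r (t - 0) _ _ ltac:(lra) Hder_le). lra. }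
  assert (HEt : E t <= 0).
  { unfold Z in HZt. assert (0 < exp (- kap * t)) by apply exp_pos.
    apply Rnot_lt_le; intro. assert (0 < exp (- kap * t) * E t) by (apply Rmult_lt_0_compat; auto). lra. }
  intros x Hx. apply Rnot_lt_le; intro Hneg.
  assert (0 < E t).
  { unfold E. apply RInt_pos_pt with x; auto; try lra.
    apply rcont_t_scont with 0 T; auto.
    intros; unfold hm; apply hE_nonneg.
    unfold hm; apply hE_pos; auto. }
  lra.
Qed.

Lemma exp_le x y : x <= y -> exp x <= exp y.
Proof. intros H. destruct (Rle_lt_or_eq_dec x y H) as [H' | ->]. left; apply exp_increasing; auto. lra. Qed.

Lemma u_bound (T L r sig2 Gb Ub M : R) (u ut ux uxx g : R -> R -> R) :
  0 < T -> 0 < L -> 0 < r ->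
  (forall t x, 0 < t < T -> 0 < x < L ->
     is_derive (fun s => u s x) t (ut t x) /\
     is_derive (fun y => u t y) x (ux t x) /\
     is_derive (fun y => ux t y) x (uxx t x)) ->
  rcont 0 T 0 L u -> rcont 0 T 0 L ut ->
  (forall t, 0 < t < T -> scont 0 L (ux t) /\ scont 0 L (uxx t) /\ scont 0 L (g t)) ->
  (forall t, 0 < t < T -> ux t 0 = 0 /\ ux t L = 0) ->
  (forall t x, 0 < t < T -> 0 < x < L -> ut t x + sig2 * uxx t x - r * u t x + (g t x) ^ 2 = 0) ->
  (forall t x, 0 < t < T -> 0 <= x <= L -> Rabs (g t x) <= Gb) ->
  (forall x, 0 <= x <= L -> Rabs (u T x) <= Ub) ->
  (forall t x y, 0 < t < T -> 0 <= x <= L -> 0 <= y <= L -> Rabs (u t x - u t y) <= M * L) ->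
  forall t x, 0 < t < T -> 0 <= x <= L -> Rabs (u t x) <= Ub + exp (r * T) * T * Gb ^ 2 + M * L.
Proof.
  intros HT HL Hr Hder Hu Hut Hsc Hbc Hpde Hgb HUb Hosc t x Ht Hx.
  assert (Uu := heine2 _ _ _ _ _ Hu). assert (Uut := heine2 _ _ _ _ _ Hut).
  assert (Hus : forall s, 0 <= s <= T -> scont 0 L (u s)) by (intros; apply rcont_t_scont with 0 T; auto).
  set (I := fun s => RInt (u s) 0 L).
  set (Q := fun s => RInt (fun x => (g s x) ^ 2) 0 L).
  assert (HIc : scont 0 T I) by (apply int_cont; auto; lra).
  assert (HQ : forall s, 0 < s < T -> 0 <= Q s <= L * Gb ^ 2).
  { intros s Hs. destruct (Hsc s Hs) as [_ [_ C]].
    assert (Ex : ex_RInt (fun x => (g s x) ^ 2) 0 L).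
    { apply scont_exRInt; [lra|]. apply scont_mult; try lra; auto. apply scont_mult; try lra; auto. apply scont_const. }
    split.
    - replace 0 with ((L - 0) * 0) by ring. apply RInt_ge_const; auto; try lra. intros; apply pow2_ge_0.
    - replace (L * Gb ^ 2) with ((L - 0) * Gb ^ 2) by ring. apply RInt_le_const; auto; try lra.
      intros y Hy. specialize (Hgb s y Hs ltac:(lra)). rewrite <- (pow2_abs (g s y)).
      apply pow_incr. split; auto. apply Rabs_pos. }
  assert (HId : forall s, 0 < s < T -> is_derive I s (r * I s - Q s)).
  { intros s Hs. destruct (Hsc s Hs) as [A [B C]].
    replace (r * I s - Q s) with (RInt (ut s) 0 L).
    apply (leibniz 0 T 0 L u ut); auto; try lra. intros; apply Hder; auto.
    assert (Eux : RInt (uxx s) 0 L = 0).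
    { rewrite (ftc 0 L (ux s) (uxx s)); auto. destruct (Hbc s Hs) as [B0 BL]. rewrite B0, BL. req; ring.
      intros; apply Hder; auto. }
    assert (ExA : ex_RInt (fun x => - sig2 * uxx s x) 0 L) by (apply ex_RInt_scalR; apply scont_exRInt; auto; lra).
    assert (ExB : ex_RInt (fun x => r * u s x) 0 L) by (apply ex_RInt_scalR; apply scont_exRInt; [lra|apply Hus; lra]).
    assert (ExC : ex_RInt (fun x => (g s x) ^ 2) 0 L).
    { apply scont_exRInt; [lra|]. apply scont_mult; try lra; auto. apply scont_mult; try lra; auto. apply scont_const. }
    transitivity (RInt (fun x => (- sig2 * uxx s x + r * u s x) - (g s x) ^ 2) 0 L).
    { apply RInt_ext. intros y Hy. rewrite Rmin_left in Hy by lra. rewrite Rmax_right in Hy by lra.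
      specialize (Hpde s y Hs Hy). lra. }
    rewrite RInt_minusR; auto. 2: apply ex_RInt_plusR; auto.
    assert (ExU : ex_RInt (uxx s) 0 L) by (apply scont_exRInt; auto; lra).
    assert (ExV : ex_RInt (u s) 0 L) by (apply scont_exRInt; [lra|apply Hus; lra]).
    rewrite RInt_plusR; auto. rewrite !RInt_scalR by auto.
    rewrite Eux. unfold I, Q. req; ring. }
  set (J := fun s => exp (- r * s) * I s).
  assert (HJc : scont t T J).
  { apply scont_mult; try lra. apply scont_exp_lin. apply scont_sub with 0 T; auto; lra. }
  destruct (mvt_s J (fun s => - exp (- r * s) * Q s) t T ltac:(lra) HJc) as [c [Hc Hmvt]].
  { intros s Hs. replace (- exp (- r * s) * Q s) with ((- r * exp (- r * s)) * I s + exp (- r * s) * (r * I s - Q s)) by ring.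
    apply (is_derive_multR (fun s => exp (- r * s)) I s). auto_derive; auto; ring. apply HId; lra. }
  destruct (HQ c ltac:(lra)) as [Q0 Q1].
  assert (Ec : 0 < exp (- r * c) <= 1).
  { split. apply exp_pos. rewrite <- exp_0. apply exp_le. nra. }
  assert (HIT : Rabs (I T) <= L * Ub).
  { unfold I. replace (L * Ub) with ((L - 0) * Ub) by ring. apply RInt_abs_bound; [lra| |].
    apply scont_exRInt; [lra|apply Hus; lra]. intros; apply HUb; lra. }
  assert (HJ1 : J T <= J t) by (unfold J in *; assert (0 <= exp (- r * c) * Q c * (T - t)) by (apply Rmult_le_pos; [apply Rmult_le_pos|]; lra); lra).
  assert (HJ2 : J t <= J T + L * Gb ^ 2 * T).
  { assert (exp (- r * c) * Q c * (T - t) <= 1 * (L * Gb ^ 2) * T).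
    { apply Rmult_le_compat; try lra. apply Rmult_le_pos; lra. apply Rmult_le_compat; lra. }
    unfold J in *. lra. }
  set (a := exp (r * t)). set (b := exp (- r * T)).
  assert (Ha : 0 < a) by apply exp_pos. assert (Hb : 0 < b) by apply exp_pos.
  assert (Hab : a * b <= 1).
  { unfold a, b. rewrite <- exp_plus. rewrite <- exp_0. apply exp_le. nra. }
  assert (HaT : a <= exp (r * T)) by (unfold a; apply exp_le; nra).
  assert (HIJ : I t = a * J t).
  { unfold J, a. rewrite <- Rmult_assoc, <- exp_plus. replace (r * t + - r * t) with 0 by ring. rewrite exp_0. symmetry; apply Rmult_1_l. }
  assert (HJT : J T = b * I T) by reflexivity.
  assert (HJabs : Rabs (J t) <= b * (L * Ub) + L * Gb ^ 2 * T).
  { assert (Rabs (J T) <= b * (L * Ub)) by (rewrite HJT, Rabs_mult, Rabs_right by lra; apply Rmult_le_compat_l; lra).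
    assert (0 <= L * Gb ^ 2 * T) by (apply Rmult_le_pos; [apply Rmult_le_pos; [lra|apply pow2_ge_0]|lra]).
    revert H HJ1 HJ2. unfold Rabs; repeat destruct Rcase_abs; intros; lra. }
  assert (HIabs : Rabs (I t) <= L * Ub + exp (r * T) * (L * Gb ^ 2 * T)).
  { rewrite HIJ, Rabs_mult, (Rabs_right a) by lra.
    apply Rle_trans with (a * (b * (L * Ub) + L * Gb ^ 2 * T)). apply Rmult_le_compat_l; lra.
    assert (0 <= L * Ub) by (assert (0 <= Rabs (I T)) by apply Rabs_pos; lra).
    assert (0 <= L * Gb ^ 2 * T) by (apply Rmult_le_pos; [apply Rmult_le_pos; [lra|apply pow2_ge_0]|lra]).
    assert (a * b * (L * Ub) <= 1 * (L * Ub)) by (apply Rmult_le_compat_r; lra).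
    assert (a * (L * Gb ^ 2 * T) <= exp (r * T) * (L * Gb ^ 2 * T)) by (apply Rmult_le_compat_r; lra).
    nra. }
  assert (Hdiff : Rabs (L * u t x - I t) <= L * (M * L)).
  { replace (L * u t x - I t) with (RInt (fun y => u t x - u t y) 0 L).
    replace (L * (M * L)) with ((L - 0) * (M * L)) by ring.
    apply RInt_abs_bound; [lra| |]. apply ex_RInt_minusR. apply ex_RInt_constR. apply scont_exRInt; [lra|apply Hus; lra].
    intros y Hy. apply Hosc; auto; lra.
    rewrite RInt_minusR. rewrite RInt_constR. unfold I. req; ring. apply ex_RInt_constR. apply scont_exRInt; [lra|apply Hus; lra]. }
  assert (Hfin : L * Rabs (u t x) <= L * (Ub + exp (r * T) * T * Gb ^ 2 + M * L)).
  { replace (L * Rabs (u t x)) with (Rabs (L * u t x)) by (rewrite Rabs_mult, Rabs_right; lra).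
    replace (L * (Ub + exp (r * T) * T * Gb ^ 2 + M * L)) with (L * Ub + exp (r * T) * (L * Gb ^ 2 * T) + L * (M * L)) by ring.
    replace (L * u t x) with ((L * u t x - I t) + I t) by ring.
    eapply Rle_trans. apply Rabs_triang. lra. }
  apply Rmult_le_reg_l with L; auto.
Qed.

Lemma rcont_refl T L f : rcont 0 T 0 L f -> rcont 0 T 0 L (fun t x => f t (L - x)).
Proof. intros Hf t x Ht Hx e He. destruct (Hf t (L - x) Ht ltac:(lra) e He) as [d [Hd H]].
  exists d; split; auto. intros s y Hs Hy H1 H2. apply H; auto; try lra.
  replace (L - y - (L - x)) with (- (y - x)) by ring. rewrite Rabs_Ropp; auto. Qed.
Lemma rcont_opp T L f : rcont 0 T 0 L f -> rcont 0 T 0 L (fun t x => - f t x).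
Proof. intros Hf t x Ht Hx e He. destruct (Hf t x Ht Hx e He) as [d [Hd H]].
  exists d; split; auto. intros s y Hs Hy H1 H2.
  replace (- f s y - - f t x) with (- (f s y - f t x)) by ring. rewrite Rabs_Ropp; auto. Qed.

Lemma deriv_bound (f : R -> R) x l d M : is_derive f x l -> 0 < d ->
  (forall y, Rabs (y - x) < d -> Rabs (f y - f x) <= M * Rabs (y - x)) -> Rabs l <= M.
Proof.
  intros Hd Hd0 H. apply Rnot_lt_le; intro Hlt. apply is_derive_Reals in Hd.
  destruct (Hd (Rabs l - M) ltac:(lra)) as [del Hdel].
  set (h := Rmin del d / 2).
  assert (Hh : 0 < h) by (unfold h; apply Rmin_case; destruct del; simpl; lra).
  assert (Hh2 : h < del) by (unfold h; generalize (Rmin_l del d); destruct del; simpl in *; lra).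
  assert (Hh3 : h < d) by (unfold h; generalize (Rmin_r del d); lra).
  specialize (Hdel h ltac:(lra) ltac:(rewrite Rabs_right; lra)).
  specialize (H (x + h) ltac:(replace (x + h - x) with h by ring; rewrite Rabs_right; lra)).
  replace (x + h - x) with h in H by ring. rewrite (Rabs_right h) in H by lra.
  assert (Rabs ((f (x + h) - f x) / h) <= M).
  { unfold Rdiv. rewrite Rabs_mult, Rabs_inv, (Rabs_right h) by lra.
    apply Rmult_le_reg_r with h; auto. field_simplify; lra. }
  assert (Rabs l <= Rabs ((f (x + h) - f x) / h) + Rabs ((f (x + h) - f x) / h - l)).
  { replace l with ((f (x + h) - f x) / h - ((f (x + h) - f x) / h - l)) at 1 by ring.
    eapply Rle_trans. apply Rabs_triang. rewrite Rabs_Ropp. lra. }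
  lra.
Qed.

Lemma Gb_lemma bb cc P v Pb M : 0 < bb -> 0 < cc -> Rabs P <= Pb -> Rabs v <= M ->
  Rabs (/ 2 * (bb + cc * P - v)) <= / 2 * (bb + cc * Pb + M).
Proof.
  intros Hb Hc HP Hv.
  assert (- Pb <= P <= Pb) by (revert HP; unfold Rabs; destruct Rcase_abs; lra).
  assert (- M <= v <= M) by (revert Hv; unfold Rabs; destruct Rcase_abs; lra).
  assert (cc * P <= cc * Pb) by (apply Rmult_le_compat_l; lra).
  assert (cc * (- Pb) <= cc * P) by (apply Rmult_le_compat_l; lra).
  assert (0 <= Pb) by (eapply Rle_trans; [apply Rabs_pos|apply HP]).
  assert (0 <= cc * Pb) by (apply Rmult_le_pos; lra).
  unfold Rabs; destruct Rcase_abs; lra.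
Qed.

Theorem lemma2p2 :
  forall (L T r eps gamma : R) (uT uT1 uT2 m0 m01 m02 : R -> R),
    0 < L -> 0 < T -> 0 < r -> 0 < eps -> 0 < gamma ->
    C2gamma L gamma uT uT1 uT2 -> C2gamma L gamma m0 m01 m02 ->
    uT1 0 = 0 -> uT1 L = 0 ->
    m0 0 = 0 -> m01 0 = 0 -> m0 L = 0 -> m01 L = 0 ->
    (forall x, 0 <= x <= L -> 0 <= m0 x) -> RInt m0 0 L = 1 ->
    (forall x, 0 <= x <= L -> 0 <= uT x) ->
    exists C, 0 < C /\
    forall (sigma : R) (u ut ux uxx m mt mx mxx : R -> R -> R),
      0 < sigma ->
      C12 T L u ut ux uxx -> C12 T L m mt mx mxx ->
      (forall t x, 0 < t < T -> 0 < x < L ->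
         ut t x + sigma ^ 2 / 2 * uxx t x - r * u t x
           + (Gfun eps L ux m t x) ^ 2 = 0) ->
      (forall t x, 0 < t < T -> 0 < x < L ->
         mt t x - sigma ^ 2 / 2 * mxx t x
           - Derive (fun y => Gfun eps L ux m t y * m t y) x = 0) ->
      (forall x, 0 <= x <= L -> m 0 x = m0 x /\ u T x = uT x) ->
      (forall t, 0 <= t <= T -> ux t 0 = 0 /\ ux t L = 0) ->
      (forall t, 0 <= t <= T ->
         sigma ^ 2 / 2 * mx t 0 + Gfun eps L ux m t 0 * m t 0 = 0 /\
         sigma ^ 2 / 2 * mx t L + Gfun eps L ux m t L * m t L = 0) ->
      (forall t x t' x', 0 <= t <= T -> 0 <= x <= L -> 0 <= t' <= T -> 0 <= x' <= L ->
         Rabs (u t x) + Rabs (ux t' x') <= C) /\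
      (forall t, 0 <= t <= T -> Rabs (RInt (fun x => ux t x * m t x) 0 L) <= C).
Proof.
  intros L T r eps gamma uT uT1 uT2 m0 m01 m02 HL HT Hr Heps Hgam HuT Hm0C HuT10 HuT1L
    Hm00 Hm010 Hm0L Hm01L Hm0pos Hm0mass HuTpos.
  destruct HuT as [DuT [DuT1 [CuT [CuT1 [CuT2 _]]]]].
  assert (SuT : scont 0 L uT) by exact CuT.
  assert (SuT1 : scont 0 L uT1) by exact CuT1.
  destruct (evt1 0 L (fun x => Rabs (uT1 x)) ltac:(lra)) as [x1 [Hx1 HK1]].
  { apply scont_comp; auto; try lra. intros; apply Rcontinuity_abs. }
  set (K1 := Rabs (uT1 x1)).
  destruct (evt1 0 L (fun x => Rabs (uT x)) ltac:(lra)) as [x2 [Hx2 HUb]].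
  { apply scont_comp; auto; try lra. intros; apply Rcontinuity_abs. }
  set (Ub := Rabs (uT x2)).
  assert (HK1p : 0 <= K1) by apply Rabs_pos. assert (HUbp : 0 <= Ub) by apply Rabs_pos.
  set (M := K1 + 1).
  set (bb := bcoef eps). set (cc := ccoef eps).
  assert (Hbb : 0 < bb) by (unfold bb, bcoef; apply Rdiv_lt_0_compat; lra).
  assert (Hcc : 0 < cc) by (unfold cc, ccoef; apply Rdiv_lt_0_compat; lra).
  set (Gb := / 2 * (bb + cc * M + M)).
  set (Bu := Ub + exp (r * T) * T * Gb ^ 2 + M * L).
  assert (HBu : 0 <= Bu).
  { unfold Bu. assert (0 <= exp (r * T) * T * Gb ^ 2).
    { apply Rmult_le_pos. apply Rmult_le_pos. left; apply exp_pos. lra. apply pow2_ge_0. }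
    assert (0 <= M * L) by (unfold M; apply Rmult_le_pos; lra). lra. }
  exists (Bu + M + 1). split. { unfold M in *. lra. }
  intros sigma u ut ux uxx m mt mx mxx Hsig Cu Cm Hpu Hpm Hinit Hbcu Hbcm.
  destruct Cu as [Du [Ru [Rut [Rux Ruxx]]]].
  destruct Cm as [Dm [Rm [Rmt [Rmx Rmxx]]]].
  change (rcont 0 T 0 L u) in Ru. change (rcont 0 T 0 L ut) in Rut.
  change (rcont 0 T 0 L ux) in Rux. change (rcont 0 T 0 L uxx) in Ruxx.
  change (rcont 0 T 0 L m) in Rm. change (rcont 0 T 0 L mt) in Rmt.
  change (rcont 0 T 0 L mx) in Rmx. change (rcont 0 T 0 L mxx) in Rmxx.
  assert (Hs2 : 0 < sigma ^ 2 / 2) by (assert (0 < sigma ^ 2) by (apply pow_lt; auto); lra).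
  assert (LipT0 : forall x y, 0 <= x -> x < y -> y <= L -> Rabs (uT y - uT x) <= K1 * (y - x)).
  { intros x y Hx Hxy Hy. destruct (mvt_s uT uT1 x y Hxy) as [c [Hc Hmvt]].
    apply scont_sub with 0 L; auto; lra. intros; apply DuT; lra.
    rewrite Hmvt, Rabs_mult, (Rabs_right (y - x)) by lra. apply Rmult_le_compat_r; [lra|]. apply HK1; lra. }
  assert (LipT : forall x y, 0 <= x <= L -> 0 <= y <= L -> Rabs (uT y - uT x) <= K1 * Rabs (y - x)).
  { intros x y Hx Hy. destruct (Rlt_or_le x y) as [H|H].
    - rewrite (Rabs_right (y - x)) by lra. apply LipT0; lra.
    - destruct (Rle_lt_or_eq_dec y x H) as [H'|H'].
      + rewrite <- Rabs_Ropp, (Rabs_left (y - x)) by lra. replace (- (uT y - uT x)) with (uT x - uT y) by ring.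
        replace (K1 * - (y - x)) with (K1 * (x - y)) by ring. apply LipT0; lra.
      + subst. rewrite !Rminus_diag, !Rabs_R0. lra. }
  assert (Hstr : forall t x y, 0 < t < T -> 0 < x < L -> 0 < y < L -> ux t x = ux t y ->
     (ut t y - ut t x) + sigma ^ 2 / 2 * (uxx t y - uxx t x) - r * (u t y - u t x) = 0).
  { intros t x y Ht Hx Hy Heq. assert (A := Hpu t x Ht Hx). assert (B := Hpu t y Ht Hy).
    assert (Gfun eps L ux m t x = Gfun eps L ux m t y) by (unfold Gfun; rewrite Heq; reflexivity).
    rewrite H in A. lra. }
  assert (HbcuI : forall t, 0 < t < T -> ux t 0 = 0 /\ ux t L = 0) by (intros; apply Hbcu; lra).
  assert (Lip1 := grad_lip T L r (sigma ^ 2 / 2) M K1 u ut ux uxx HT HL Hr ltac:(lra) ltac:(unfold M; lra) ltac:(unfold M; lra)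
     Du Ru Rux HbcuI).
  assert (Lip1' : forall t x y, 0 < t < T -> 0 <= x <= y -> y <= L -> u t y - u t x <= M * (y - x)).
  { apply Lip1; auto. intros x y Hxy Hy. rewrite (proj2 (Hinit y ltac:(lra))), (proj2 (Hinit x ltac:(lra))).
    assert (A := LipT x y ltac:(lra) ltac:(lra)). rewrite (Rabs_right (y - x)) in A by lra.
    revert A; unfold Rabs; destruct Rcase_abs; lra. }
  clear Lip1.
  assert (Lip2 := grad_lip T L r (sigma ^ 2 / 2) M K1 (fun t x => u t (L - x)) (fun t x => ut t (L - x))
     (fun t x => - ux t (L - x)) (fun t x => uxx t (L - x)) HT HL Hr ltac:(lra) ltac:(unfold M; lra) ltac:(unfold M; lra)).
  assert (Lip2' : forall t x y, 0 < t < T -> 0 <= x <= y -> y <= L -> u t (L - y) - u t (L - x) <= M * (y - x)).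
  { apply Lip2.
    - intros t x Ht Hx. destruct (Du t (L - x) Ht ltac:(lra)) as [A [B C]]. split; [|split].
      + exact A.
      + apply (is_derive_refl (fun y => u t y)). exact B.
      + replace (uxx t (L - x)) with (- - uxx t (L - x)) by ring.
        apply (is_derive_opp (fun y => ux t (L - y))). apply (is_derive_refl (fun y => ux t y)). exact C.
    - apply rcont_refl; auto.
    - apply rcont_opp. apply rcont_refl; auto.
    - intros t Ht. rewrite Rminus_0_r, Rminus_diag. destruct (HbcuI t Ht) as [A B]. rewrite A, B. split; ring.
    - intros x y Hxy Hy. rewrite (proj2 (Hinit (L - y) ltac:(lra))), (proj2 (Hinit (L - x) ltac:(lra))).
      assert (A := LipT (L - x) (L - y) ltac:(lra) ltac:(lra)).
      replace (L - y - (L - x)) with (- (y - x)) in A by ring. rewrite Rabs_Ropp, (Rabs_right (y - x)) in A by lra.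
      revert A; unfold Rabs; destruct Rcase_abs; lra.
    - intros t x y Ht Hx Hy Heq. apply (Hstr t (L - x) (L - y) Ht ltac:(lra) ltac:(lra)). lra. }
  clear Lip2.
  assert (LipA : forall t x y, 0 < t < T -> 0 <= x <= L -> 0 <= y <= L -> Rabs (u t y - u t x) <= M * Rabs (y - x)).
  { assert (W : forall t x y, 0 < t < T -> 0 <= x <= y -> y <= L -> Rabs (u t y - u t x) <= M * (y - x)).
    { intros t x y Ht Hxy Hy. assert (A := Lip1' t x y Ht Hxy Hy).
      assert (B := Lip2' t (L - y) (L - x) Ht ltac:(lra) ltac:(lra)).
      replace (L - (L - x)) with x in B by ring. replace (L - (L - y)) with y in B by ring.
      replace (L - x - (L - y)) with (y - x) in B by ring.
      unfold Rabs; destruct Rcase_abs; lra. }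
    intros t x y Ht Hx Hy. destruct (Rle_or_lt x y) as [H|H].
    - rewrite (Rabs_right (y - x)) by lra. apply W; lra.
    - rewrite <- Rabs_Ropp, (Rabs_left (y - x)) by lra. replace (- (u t y - u t x)) with (u t x - u t y) by ring.
      replace (M * - (y - x)) with (M * (x - y)) by ring. apply W; lra. }
  assert (Hux_int : forall t x, 0 < t < T -> 0 < x < L -> Rabs (ux t x) <= M).
  { intros t x Ht Hx. apply (deriv_bound (fun y => u t y) x (ux t x) (Rmin x (L - x)) M).
    apply Du; auto. apply Rmin_case; lra.
    intros y Hy. assert (Rabs (y - x) < x) by (eapply Rlt_le_trans; [apply Hy|apply Rmin_l]).
    assert (Rabs (y - x) < L - x) by (eapply Rlt_le_trans; [apply Hy|apply Rmin_r]).
    apply LipA; auto; revert H H0; unfold Rabs; destruct Rcase_abs; lra. }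
  assert (Hux : forall t x, 0 <= t <= T -> 0 <= x <= L -> Rabs (ux t x) <= M).
  { apply (rect_closure T L (fun t x => Rabs (ux t x)) M HT HL). apply rcont_abs; auto. auto. }
  destruct (evt2 0 T 0 L (fun t x => Rabs (m t x)) ltac:(lra) ltac:(lra)) as [t1 [y1 [Ht1 [Hy1 Hmmax]]]].
  { apply heine2. apply rcont_abs; auto. }
  set (mmax := Rabs (m t1 y1)).
  assert (Hms : forall s, 0 <= s <= T -> scont 0 L (m s)) by (intros; apply rcont_t_scont with 0 T; auto).
  assert (Huxs : forall s, 0 <= s <= T -> scont 0 L (ux s)) by (intros; apply rcont_t_scont with 0 T; auto).
  assert (HP1 : forall t, 0 <= t <= T -> Rabs (RInt (fun y => ux t y * m t y) 0 L) <= L * (M * mmax)).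
  { intros t Ht. replace (L * (M * mmax)) with ((L - 0) * (M * mmax)) by ring.
    apply RInt_abs_bound; [lra| |]. apply scont_exRInt; [lra|]. apply scont_mult; auto; lra.
    intros y Hy. rewrite Rabs_mult. apply Rmult_le_compat; try apply Rabs_pos. apply Hux; lra. apply Hmmax; lra. }
  set (gx := fun t x => / 2 * (0 - uxx t x)).
  assert (Hgd : forall t x, 0 < t < T -> 0 < x < L -> is_derive (fun y => Gfun eps L ux m t y) x (gx t x)).
  { intros t x Ht Hx. unfold Gfun, gx. apply is_derive_scalR. apply is_derive_minusR. apply is_derive_constR.
    apply Du; auto. }
  assert (Hgs : forall t, 0 <= t <= T -> scont 0 L (fun x => Gfun eps L ux m t x)).
  { intros t Ht. unfold Gfun. apply scont_mult; try lra. apply scont_const. apply scont_minus; try lra.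
    apply scont_const. apply Huxs; auto. }
  assert (Hmres : forall t, 0 <= t <= T -> (forall x, 0 <= x <= L -> 0 <= m t x) /\ RInt (m t) 0 L = 1).
  { apply (m_lemma T L (sigma ^ 2 / 2) (/ 2 * (bb + cc * (L * (M * mmax)) + M)) m mt mx mxx
     (fun t x => Gfun eps L ux m t x) gx m0 HT HL Hs2 Dm Rm Rmt).
  - intros t Ht. split; [|split; [|split]].
    + apply rcont_t_scont with 0 T; auto; lra.
    + apply rcont_t_scont with 0 T; auto; lra.
    + apply Hgs; lra.
    + unfold gx. apply scont_mult; try lra. apply scont_const. apply scont_minus; try lra. apply scont_const.
      apply rcont_t_scont with 0 T; auto; lra.
  - auto.
  - intros t x Ht Hx. apply Gb_lemma; auto. apply HP1; lra. apply Hux; lra.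
  - intros t x Ht Hx. assert (A := Hpm t x Ht Hx).
    assert (Hd : is_derive (fun y => Gfun eps L ux m t y * m t y) x (gx t x * m t x + Gfun eps L ux m t x * mx t x)).
    { apply (is_derive_multR (fun y => Gfun eps L ux m t y) (fun y => m t y)). apply Hgd; auto. apply Dm; auto. }
    assert (E : Derive (fun y => Gfun eps L ux m t y * m t y) x = gx t x * m t x + Gfun eps L ux m t x * mx t x)
      by (apply is_derive_unique; exact Hd).
    rewrite E in A. lra.
  - intros t Ht. apply Hbcm; lra.
  - intros x Hx. apply Hinit; auto.
  - auto.
  - auto. }
  assert (HP : forall t, 0 <= t <= T -> Rabs (RInt (fun y => ux t y * m t y) 0 L) <= M).
  { intros t Ht. destruct (Hmres t Ht) as [Hpos Hone].
    assert (Ex : ex_RInt (fun y => ux t y * m t y) 0 L) by (apply scont_exRInt; [lra|]; apply scont_mult; auto; lra).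
    assert (Exm : ex_RInt (m t) 0 L) by (apply scont_exRInt; auto; lra).
    assert (A : RInt (fun y => ux t y * m t y) 0 L <= RInt (fun y => M * m t y) 0 L).
    { apply RInt_le; auto; try lra. apply ex_RInt_scalR; auto.
      intros y Hy. assert (B := Hux t y Ht ltac:(lra)). assert (C := Hpos y ltac:(lra)).
      apply Rmult_le_compat_r; auto. revert B; unfold Rabs; destruct Rcase_abs; lra. }
    assert (B : RInt (fun y => (- M) * m t y) 0 L <= RInt (fun y => ux t y * m t y) 0 L).
    { apply RInt_le; auto; try lra. apply ex_RInt_scalR; auto.
      intros y Hy. assert (B := Hux t y Ht ltac:(lra)). assert (C := Hpos y ltac:(lra)).
      apply Rmult_le_compat_r; auto. revert B; unfold Rabs; destruct Rcase_abs; lra. }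
    rewrite RInt_scalR in A, B by auto. rewrite Hone in A, B.
    unfold Rabs; destruct Rcase_abs; lra. }
  assert (HG : forall t x, 0 <= t <= T -> 0 <= x <= L -> Rabs (Gfun eps L ux m t x) <= Gb).
  { intros t x Ht Hx. unfold Gfun, Gb. apply Gb_lemma; auto. }
  assert (HuI : forall t x, 0 < t < T -> 0 <= x <= L -> Rabs (u t x) <= Bu).
  { apply (u_bound T L r (sigma ^ 2 / 2) Gb Ub M u ut ux uxx (fun t x => Gfun eps L ux m t x)); auto.
    - intros t Ht. split; [|split].
      + apply Huxs; lra.
      + apply rcont_t_scont with 0 T; auto; lra.
      + apply Hgs; lra.
    - intros t x Ht Hx. apply HG; lra.
    - intros x Hx. rewrite (proj2 (Hinit x Hx)). apply HUb; auto.
    - intros t x y Ht Hx Hy. rewrite <- Rabs_Ropp. replace (- (u t x - u t y)) with (u t y - u t x) by ring.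
      eapply Rle_trans. apply LipA; auto. apply Rmult_le_compat_l. unfold M; lra.
      unfold Rabs; destruct Rcase_abs; lra. }
  assert (Hu : forall t x, 0 <= t <= T -> 0 <= x <= L -> Rabs (u t x) <= Bu).
  { apply (rect_closure T L (fun t x => Rabs (u t x)) Bu HT HL). apply rcont_abs; auto.
    intros t x Ht Hx. apply HuI; lra. }
  split.
  - intros t x t' x' Ht Hx Ht' Hx'. assert (A := Hu t x Ht Hx). assert (B := Hux t' x' Ht' Hx'). lra.
  - intros t Ht. assert (A := HP t Ht). assert (0 <= Bu) by auto. lra.
Qed.
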